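(* The class of ph-homogeneous partial cubes is closed under convex subgraphs, gated amalgams, and finite Cartesian products as well as (weak) Cartesian products of infinite families.
   Context: Graphs are simple, undirected, possibly infinite. In a connected graph $G$, $I_G(x,y)$ is the set of vertices on shortest $(x,y)$-paths; $A\subseteq V(G)$ is convex if $I_G(x,y)\subseteq A$ for all $x,y\in A$; $co_G(A)$ is the convex hull; a subgraph is convex if its vertex set is convex; $\mathcal{I}_G(A)=\bigcup_{x,y\in A}I_G(x,y)$. A partial cube is an isometric subgraph of a (possibly infinite) hypercube. A copoint at $x$ is a convex set maximal with respect to not containing $x$. The pre-hull number $ph(G)$ is the least $n$ with $co_G(C\cup\{x\})=\mathcal{I}^n_G(C\cup\{x\})$ for every vertex $x$ and every copoint $C$ at $x$. A graph is ph-homogeneous if each of its finite convex subgraphs has pre-hull number at most $1$. A set $A$ is gated if every vertex $x$ has a vertex $y\in A$ with $y\in I_G(x,z)$ for all $z\in A$. A graph $G$ is the gated amalgam of $G_0$ and $G_1$ if $G_0,G_1$ are isomorphic to two intersecting gated subgraphs of $G$ whose union is $G$. The weak Cartesian product of an infinite family of connected graphs is a connected component of their Cartesian product. *)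

(* Defs.v *)
From Stdlib Require Import List Arith.


Record Graph := mkGraph {
  V : Type;
  adj : V -> V -> Prop;
  adj_sym : forall x y, adj x y -> adj y x;
  adj_irrefl : forall x, ~ adj x x
}.

Inductive walk (G : Graph) : nat -> V G -> V G -> Prop :=
| walk0 : forall x, walk G 0 x x
| walkS : forall n x y z, adj G x y -> walk G n y z -> walk G (S n) x z.

Definition gdist (G : Graph) (x y : V G) (n : nat) : Prop :=
  walk G n x y /\ forall k, walk G k x y -> n <= k.

Definition connected (G : Graph) : Prop :=
  forall x y : V G, exists n, walk G n x y.

Definition interval (G : Graph) (x y z : V G) : Prop :=
  exists n m, walk G n x z /\ walk G m z y /\ forall k, walk G k x y -> n + m <= k.

Definition vset (G : Graph) := V G -> Prop.

Definition subset (G : Graph) (A B : vset G) : Prop := forall v, A v -> B v.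

Definition convex (G : Graph) (A : vset G) : Prop :=
  forall x y z, A x -> A y -> interval G x y z -> A z.

Definition hull (G : Graph) (A : vset G) : vset G :=
  fun z => forall B : vset G, convex G B -> subset G A B -> B z.

Definition copoint (G : Graph) (C : vset G) (x : V G) : Prop :=
  convex G C /\ ~ C x /\
  forall D : vset G, convex G D -> ~ D x -> subset G C D -> subset G D C.

Definition Iset (G : Graph) (A : vset G) : vset G :=
  fun z => exists x y, A x /\ A y /\ interval G x y z.

Fixpoint Iter (G : Graph) (n : nat) (A : vset G) : vset G :=
  match n with
  | 0 => A
  | S n' => Iset G (Iter G n' A)
  end.

Definition add1 (G : Graph) (C : vset G) (x : V G) : vset G :=
  fun v => C v \/ v = x.

Definition ph_works (G : Graph) (n : nat) : Prop :=
  forall (x : V G) (C : vset G), copoint G C x ->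
    forall z, hull G (add1 G C x) z <-> Iter G n (add1 G C x) z.

(* ph(G) <= 1  (ph(G) is the least n for which ph_works G n holds) *)
Definition ph_le1 (G : Graph) : Prop := exists n, n <= 1 /\ ph_works G n.

Definition induced (G : Graph) (S : vset G) : Graph.
Proof.
  refine (@mkGraph {v : V G | S v}
            (fun a b => adj G (proj1_sig a) (proj1_sig b)) _ _).
  - intros a b H; exact (adj_sym G _ _ H).
  - intros a; exact (adj_irrefl G _).
Defined.

Definition finite_set (G : Graph) (S : vset G) : Prop :=
  exists l : list (V G), forall v, S v -> In v l.

Definition ph_homogeneous (G : Graph) : Prop :=
  forall S : vset G, convex G S -> finite_set G S -> ph_le1 (induced G S).

(* the (possibly infinite) hypercube on index set I: finite subsets of I *)
Definition finite_support (I : Type) (s : I -> bool) : Prop :=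
  exists l : list I, forall i, s i = true -> In i l.

Definition hypercube (I : Type) : Graph.
Proof.
  refine (@mkGraph {s : I -> bool | finite_support I s}
    (fun s t => exists i, proj1_sig s i <> proj1_sig t i /\
                 forall j, proj1_sig s j <> proj1_sig t j -> j = i) _ _).
  - intros s t [i [Hi Hj]]. exists i. split.
    + intro E; apply Hi; symmetry; exact E.
    + intros j Hne; apply Hj; intro E; apply Hne; symmetry; exact E.
  - intros s [i [Hi _]]; apply Hi; reflexivity.
Defined.

Definition partial_cube (G : Graph) : Prop :=
  exists (I : Type) (f : V G -> V (hypercube I)),
    (forall x y, f x = f y -> x = y) /\
    (forall x y n, gdist G x y n <-> gdist (hypercube I) (f x) (f y) n).

Definition ph_hom_partial_cube (G : Graph) : Prop :=
  partial_cube G /\ ph_homogeneous G.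

Definition gated (G : Graph) (A : vset G) : Prop :=
  forall x : V G, exists y, A y /\ forall z, A z -> interval G x z y.

Definition graph_iso (G H : Graph) : Prop :=
  exists f : V G -> V H,
    (forall x y, f x = f y -> x = y) /\ (forall y, exists x, f x = y) /\
    (forall x y, adj G x y <-> adj H (f x) (f y)).

Definition gated_amalgam (G G0 G1 : Graph) : Prop :=
  exists A0 A1 : vset G,
    gated G A0 /\ gated G A1 /\ (exists v, A0 v /\ A1 v) /\
    (forall v, A0 v \/ A1 v) /\
    graph_iso G0 (induced G A0) /\ graph_iso G1 (induced G A1).

Definition cart_prod (I : Type) (F : I -> Graph) : Graph.
Proof.
  refine (@mkGraph (forall i, V (F i))
    (fun x y => exists i, adj (F i) (x i) (y i) /\ forall j, j <> i -> x j = y j) _ _).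
  - intros x y [i [Hi Hj]]. exists i. split.
    + exact (adj_sym _ _ _ Hi).
    + intros j Hne; symmetry; exact (Hj j Hne).
  - intros x [i [Hi _]]; exact (adj_irrefl _ _ Hi).
Defined.

Definition weak_prod (I : Type) (F : I -> Graph) (b : V (cart_prod I F)) : Graph :=
  induced (cart_prod I F) (fun x => exists n, walk (cart_prod I F) n b x).

Definition finite_type (I : Type) : Prop := exists l : list I, forall i, In i l.

(* Main.v *)
Require Import Defs.
From Stdlib Require Import List Arith Lia Classical ClassicalEpsilon FunctionalExtensionality ProofIrrelevance Bool FinFun.
Import ListNotations.

Section Walks.
Variable G : Graph.

Lemma walk_app : forall n x y, walk G n x y -> forall m z, walk G m y z -> walk G (n+m) x z.
Proof.
  induction 1; intros; simpl; auto. econstructor; eauto.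
Qed.

Lemma walk_rev : forall n x y, walk G n x y -> walk G n y x.
Proof.
  induction 1. constructor.
  replace (S n) with (n + 1) by lia. eapply walk_app; eauto.
  econstructor. apply adj_sym; eauto. constructor.
Qed.

Lemma walk1 : forall x y, adj G x y -> walk G 1 x y.
Proof. intros; econstructor; eauto; constructor. Qed.

Lemma walk0_eq : forall x y, walk G 0 x y -> x = y.
Proof. intros x y H; inversion H; auto. Qed.

Lemma walkS_inv : forall n x z, walk G (S n) x z -> exists y, adj G x y /\ walk G n y z.
Proof. intros n x z H; inversion H; subst; eauto. Qed.

End Walks.

Lemma ex_min : forall P : nat -> Prop, (exists n, P n) -> exists n, P n /\ forall k, P k -> n <= k.
Proof.
  intros P [n Hn].
  induction n as [n IH] using (well_founded_induction lt_wf).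
  destruct (classic (exists k, P k /\ k < n)) as [[k [Pk Hk]]|Hno].
  - exact (IH k Hk Pk).
  - exists n; split; auto. intros k Pk. destruct (le_lt_dec n k); auto.
    exfalso; apply Hno; eauto.
Qed.

Lemma walk_map : forall (H G : Graph) (phi : V H -> V G),
  (forall x y, adj H x y -> adj G (phi x) (phi y)) ->
  forall n x y, walk H n x y -> walk G n (phi x) (phi y).
Proof. intros H G phi Hphi; induction 1; econstructor; eauto. Qed.

Definition dfun (G : Graph) (d : V G -> V G -> nat) : Prop :=
  (forall x y, walk G (d x y) x y) /\ (forall x y k, walk G k x y -> d x y <= k).

Section Metric.
Variable G : Graph.
Variable d : V G -> V G -> nat.
Hypothesis Hd : dfun G d.

Lemma d_walk : forall x y, walk G (d x y) x y. Proof. apply Hd. Qed.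
Lemma d_low : forall x y k, walk G k x y -> d x y <= k. Proof. apply Hd. Qed.

Lemma d_tri : forall x y z, d x z <= d x y + d y z.
Proof. intros. apply d_low. apply walk_app with y; apply d_walk. Qed.

Lemma d_sym : forall x y, d x y = d y x.
Proof.
  intros. apply Nat.le_antisymm; apply d_low; apply walk_rev; apply d_walk.
Qed.

Lemma d_refl : forall x, d x x = 0.
Proof. intros. pose proof (d_low x x 0 (walk0 _ _)). lia. Qed.

Lemma d_zero : forall x y, d x y = 0 -> x = y.
Proof. intros x y H. pose proof (d_walk x y). rewrite H in H0. now apply walk0_eq in H0. Qed.

Lemma d_adj : forall x y, adj G x y -> d x y <= 1.
Proof. intros. apply d_low. apply walk1; auto. Qed.

Lemma interval_d : forall x y z, interval G x y z <-> d x z + d z y = d x y.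
Proof.
  intros x y z; split.
  - intros [n [m [H1 [H2 H3]]]].
    pose proof (d_low _ _ _ H1). pose proof (d_low _ _ _ H2).
    pose proof (H3 _ (d_walk x y)). pose proof (d_tri x z y). lia.
  - intros E. exists (d x z), (d z y). split; [apply d_walk|]. split; [apply d_walk|].
    intros k Hk. pose proof (d_low _ _ _ Hk). lia.
Qed.

Lemma gdist_d : forall x y n, gdist G x y n <-> n = d x y.
Proof.
  intros x y n; split.
  - intros [H1 H2]. pose proof (d_low _ _ _ H1). pose proof (H2 _ (d_walk x y)). lia.
  - intros ->. split. apply d_walk. apply d_low.
Qed.

Lemma interval_sym : forall x y z, interval G x y z -> interval G y x z.
Proof. intros x y z. rewrite !interval_d. rewrite (d_sym y z), (d_sym z x), (d_sym y x). lia. Qed.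

Lemma interval_l : forall x y, interval G x y x.
Proof. intros. rewrite interval_d, d_refl. lia. Qed.
Lemma interval_r : forall x y, interval G x y y.
Proof. intros. rewrite interval_d, d_refl. lia. Qed.

Lemma interval_xx : forall x z, interval G x x z -> z = x.
Proof. intros x z. rewrite interval_d, d_refl. intros. apply d_zero. rewrite d_sym. lia. Qed.

End Metric.

Definition eqdec {A : Type} (a b : A) : {a = b} + {a <> b} := excluded_middle_informative (a = b).

Definition bits {I : Type} (s : V (hypercube I)) : I -> bool := proj1_sig s.

Definition suppl {I : Type} (s : V (hypercube I)) : list I :=
  proj1_sig (constructive_indefinite_description _ (proj2_sig s)).

Lemma suppl_spec {I : Type} (s : V (hypercube I)) : forall i, bits s i = true -> In i (suppl s).
Proof. unfold suppl. destruct (constructive_indefinite_description _ _). simpl. auto. Qed.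

Definition dif (a b : bool) : bool := negb (Bool.eqb a b).

Definition cntL {I : Type} (L : list I) (s t : I -> bool) : nat :=
  length (filter (fun i => dif (s i) (t i)) L).

Definition covL {I : Type} (L : list I) (s t : I -> bool) : Prop :=
  forall i, s i <> t i -> In i L.

Lemma dif_true : forall a b, dif a b = true <-> a <> b.
Proof. unfold dif; destruct a, b; simpl; split; intros H; try congruence; try discriminate; try (exfalso; apply H; reflexivity). Qed.

Lemma NoDup_filter' {A} (f : A -> bool) l : NoDup l -> NoDup (filter f l).
Proof. apply NoDup_filter. Qed.

Lemma cnt_indep {I : Type} (L L' : list I) s t :
  NoDup L -> NoDup L' -> covL L s t -> covL L' s t -> cntL L s t = cntL L' s t.
Proof.
  intros N N' C C'. unfold cntL. apply Nat.le_antisymm; apply NoDup_incl_length;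
  try (apply NoDup_filter; auto);
  intros i Hi; apply filter_In in Hi; destruct Hi as [_ Hi]; apply filter_In; split; auto;
  apply dif_true in Hi; auto.
Qed.

Definition ham {I : Type} (s t : V (hypercube I)) : nat :=
  cntL (nodup eqdec (suppl s ++ suppl t)) (bits s) (bits t).

Lemma cov_supp {I : Type} (s t : V (hypercube I)) (L : list I) :
  (forall i, In i (suppl s) -> In i L) -> (forall i, In i (suppl t) -> In i L) ->
  covL L (bits s) (bits t).
Proof.
  intros H1 H2 i Hi. destruct (bits s i) eqn:E.
  - apply H1, suppl_spec; auto.
  - destruct (bits t i) eqn:E'; [apply H2, suppl_spec; auto| congruence].
Qed.

Lemma ham_L {I : Type} (s t : V (hypercube I)) L :
  NoDup L -> covL L (bits s) (bits t) -> ham s t = cntL L (bits s) (bits t).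
Proof.
  intros N C. unfold ham. apply cnt_indep; auto. apply NoDup_nodup.
  apply cov_supp; intros i Hi; apply nodup_In; apply in_or_app; auto.
Qed.

Definition L3 {I : Type} (s u t : V (hypercube I)) := nodup eqdec (suppl s ++ suppl u ++ suppl t).

Lemma L3_nd {I : Type} (s u t : V (hypercube I)) : NoDup (L3 s u t).
Proof. apply NoDup_nodup. Qed.

Lemma L3_cov {I : Type} (s u t : V (hypercube I)) :
  covL (L3 s u t) (bits s) (bits u) /\ covL (L3 s u t) (bits u) (bits t) /\
  covL (L3 s u t) (bits s) (bits t) /\ covL (L3 s u t) (bits u) (bits s) /\
  covL (L3 s u t) (bits t) (bits u) /\ covL (L3 s u t) (bits t) (bits s).
Proof.
  unfold L3. repeat split; apply cov_supp; intros i Hi; apply nodup_In;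
  repeat (apply in_or_app; (left; assumption) || right); auto.
Qed.

Lemma cnt_tri {I : Type} (L : list I) s u t : cntL L s t <= cntL L s u + cntL L u t.
Proof.
  unfold cntL; induction L as [|i L IH]; simpl; auto.
  destruct (s i), (u i), (t i); simpl in *; lia.
Qed.

Lemma cnt_sym {I : Type} (L : list I) s t : cntL L s t = cntL L t s.
Proof.
  unfold cntL; induction L as [|i L IH]; simpl; auto.
  destruct (s i), (t i); simpl in *; lia.
Qed.

Lemma cnt_cons {I : Type} (i : I) L s t :
  cntL (i :: L) s t = (if dif (s i) (t i) then 1 else 0) + cntL L s t.
Proof. unfold cntL; simpl. destruct (dif (s i) (t i)); reflexivity. Qed.

Lemma cnt_between {I : Type} (L : list I) s u t :
  cntL L s u + cntL L u t = cntL L s t <-> forall i, In i L -> u i = s i \/ u i = t i.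
Proof.
  induction L as [|i L IH].
  - unfold cntL; simpl; split; intros; tauto.
  - pose proof (cnt_tri L s u t) as T. rewrite !cnt_cons.
    split.
    + intros H. assert (Hi : u i = s i \/ u i = t i /\ cntL L s u + cntL L u t = cntL L s t).
      { unfold dif in *; destruct (s i), (u i), (t i); simpl in *; try lia; auto. }
      intros j [<-|Hj].
      * unfold dif in *; destruct (s i), (u i), (t i); simpl in *; auto; lia.
      * apply IH; auto. unfold dif in *; destruct (s i), (u i), (t i); simpl in *; lia.
    + intros H. assert (E: cntL L s u + cntL L u t = cntL L s t) by (apply IH; intros; apply H; simpl; auto).
      destruct (H i (or_introl eq_refl)) as [HH|HH]; rewrite HH;
      unfold dif in *; destruct (s i), (t i); simpl in *; lia.
Qed.

Lemma bits_eq {I : Type} (s t : V (hypercube I)) : (forall i, bits s i = bits t i) -> s = t.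
Proof.
  destruct s as [s Hs], t as [t Ht]; unfold bits; simpl; intros H.
  assert (s = t) by (apply functional_extensionality; auto). subst.
  f_equal. apply proof_irrelevance.
Qed.

Lemma cnt_ham_tri {I : Type} (s u t : V (hypercube I)) : ham s t <= ham s u + ham u t.
Proof.
  destruct (L3_cov s u t) as (C1&C2&C3&_).
  rewrite (ham_L s t _ (L3_nd s u t) C3), (ham_L s u _ (L3_nd s u t) C1),
          (ham_L u t _ (L3_nd s u t) C2). apply cnt_tri.
Qed.

Lemma ham_sym {I : Type} (s t : V (hypercube I)) : ham s t = ham t s.
Proof.
  destruct (L3_cov s s t) as (_&_&C3&_&_&C6).
  rewrite (ham_L s t _ (L3_nd s s t) C3), (ham_L t s _ (L3_nd s s t) C6). apply cnt_sym.
Qed.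

Lemma Q_adj {I : Type} (s t : V (hypercube I)) :
  adj (hypercube I) s t <-> exists i, bits s i <> bits t i /\ forall j, bits s j <> bits t j -> j = i.
Proof. simpl. unfold bits. tauto. Qed.

Lemma len_single {A} (l : list A) i : NoDup l -> (forall x, In x l -> x = i) -> length l <= 1.
Proof.
  destruct l as [|a [|b l]]; simpl; auto. intros N H.
  assert (a = i) by auto. assert (b = i) by auto. subst. inversion N; subst. simpl in *; tauto.
Qed.

Lemma cnt_adj {I : Type} (L : list I) (s t : V (hypercube I)) :
  NoDup L -> adj (hypercube I) s t -> cntL L (bits s) (bits t) <= 1.
Proof.
  intros N A. apply Q_adj in A. destruct A as [i [_ Hi]].
  unfold cntL. apply len_single with i. apply NoDup_filter; auto.
  intros x Hx. apply filter_In in Hx. destruct Hx as [_ Hx]. apply dif_true in Hx. auto.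
Qed.

Lemma cnt_refl {I : Type} (L : list I) s : cntL L s s = 0.
Proof. induction L; auto. rewrite cnt_cons. unfold dif. rewrite Bool.eqb_reflx. simpl. auto. Qed.

Lemma cnt_walk_low {I : Type} (L : list I) : NoDup L ->
  forall k s t, walk (hypercube I) k s t -> cntL L (bits s) (bits t) <= k.
Proof.
  intros N; induction 1. rewrite cnt_refl; auto.
  pose proof (cnt_adj L _ _ N H). pose proof (cnt_tri L (bits x) (bits y) (bits z)). lia.
Qed.

Lemma ham_low {I : Type} (s t : V (hypercube I)) k : walk (hypercube I) k s t -> ham s t <= k.
Proof. unfold ham. apply cnt_walk_low, NoDup_nodup. Qed.

Definition flip {I : Type} (s : V (hypercube I)) (i : I) : V (hypercube I).
Proof.
  exists (fun j => if eqdec j i then negb (bits s i) else bits s j).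
  exists (i :: suppl s). intros j. destruct (eqdec j i) as [->|n]. left; auto.
  intros Hj. right. apply suppl_spec; auto.
Defined.

Lemma bits_flip {I : Type} (s : V (hypercube I)) i j :
  bits (flip s i) j = if eqdec j i then negb (bits s i) else bits s j.
Proof. reflexivity. Qed.

Lemma flip_adj {I : Type} (s : V (hypercube I)) i : adj (hypercube I) s (flip s i).
Proof.
  apply Q_adj. exists i. rewrite bits_flip. destruct (eqdec i i) as [_|n]; [|congruence].
  split. destruct (bits s i); discriminate.
  intros j. rewrite bits_flip. destruct (eqdec j i); auto. congruence.
Qed.

Lemma cnt_ext {I : Type} (L : list I) s s' t t' :
  (forall i, In i L -> s i = s' i /\ t i = t' i) -> cntL L s t = cntL L s' t'.
Proof.
  induction L; intros H; auto. rewrite !cnt_cons.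
  destruct (H a (or_introl eq_refl)) as [-> ->]. rewrite IHL; auto. intros; apply H; simpl; auto.
Qed.

Lemma cnt_walk {I : Type} (L : list I) : NoDup L ->
  forall s t, covL L (bits s) (bits t) -> walk (hypercube I) (cntL L (bits s) (bits t)) s t.
Proof.
  induction L as [|i L IH]; intros N s t C.
  - assert (s = t). { apply bits_eq. intros i. destruct (bool_dec (bits s i) (bits t i)); auto.
      apply C in n. destruct n. } subst. constructor.
  - inversion N; subst. rewrite cnt_cons.
    destruct (bool_dec (bits s i) (bits t i)) as [E|E].
    + rewrite E. unfold dif; rewrite Bool.eqb_reflx; simpl. apply IH; auto.
      intros j Hj. destruct (C j Hj); subst; auto. congruence.
    + assert (dif (bits s i) (bits t i) = true) as -> by (apply dif_true; auto). simpl.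
      econstructor. apply (flip_adj s i).
      replace (cntL L (bits s) (bits t)) with (cntL L (bits (flip s i)) (bits t)).
      apply IH; auto.
      intros j Hj. rewrite bits_flip in Hj. destruct (eqdec j i) as [->|n].
      { exfalso. apply Hj. destruct (bits s i), (bits t i); simpl; congruence. }
      destruct (C j Hj); subst; auto. congruence.
      apply cnt_ext. intros j Hj. rewrite bits_flip. destruct (eqdec j i); subst; auto. tauto.
Qed.

Lemma ham_walk {I : Type} (s t : V (hypercube I)) : walk (hypercube I) (ham s t) s t.
Proof.
  unfold ham. apply cnt_walk. apply NoDup_nodup.
  apply cov_supp; intros i Hi; apply nodup_In; apply in_or_app; auto.
Qed.

Lemma dfun_Q (I : Type) : dfun (hypercube I) ham.
Proof. split. apply ham_walk. apply ham_low. Qed.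

Lemma ham_between {I : Type} (s u t : V (hypercube I)) :
  ham s u + ham u t = ham s t <-> forall i, bits u i = bits s i \/ bits u i = bits t i.
Proof.
  destruct (L3_cov s u t) as (C1&C2&C3&_).
  rewrite (ham_L s t _ (L3_nd s u t) C3), (ham_L s u _ (L3_nd s u t) C1),
          (ham_L u t _ (L3_nd s u t) C2). rewrite cnt_between. split; intros H i; auto.
  destruct (in_dec eqdec i (L3 s u t)) as [Hin|Hin]; auto.
  destruct (bool_dec (bits u i) (bits s i)) as [Hb|Hb]; auto.
  all: try (exfalso; apply Hin; apply C1; auto).
Qed.

Definition pcemb (G : Graph) (I : Type) (f : V G -> V (hypercube I)) : Prop :=
  dfun G (fun x y => ham (f x) (f y)).

Lemma pc_to_emb (G : Graph) : partial_cube G -> exists I f, pcemb G I f.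
Proof.
  intros [I [f [Hinj Hd]]]. exists I, f. split.
  - intros x y. assert (gdist (hypercube I) (f x) (f y) (ham (f x) (f y))) as Hg.
    { apply (gdist_d _ _ (dfun_Q I)); auto. }
    apply Hd in Hg. apply Hg.
  - intros x y k Hk. assert (gdist (hypercube I) (f x) (f y) (ham (f x) (f y))) as Hg.
    { apply (gdist_d _ _ (dfun_Q I)); auto. }
    apply Hd in Hg. apply Hg; auto.
Qed.

Lemma emb_to_pc (G : Graph) I f : pcemb G I f -> partial_cube G.
Proof.
  intros Hf. exists I, f. split.
  - intros x y E. apply (d_zero _ _ Hf). simpl. rewrite E. apply (d_refl _ _ (dfun_Q I)).
  - intros x y n. rewrite (gdist_d _ _ Hf), (gdist_d _ _ (dfun_Q I)). tauto.
Qed.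

Lemma pc_between (G : Graph) I f : pcemb G I f -> forall x y z,
  interval G x y z <-> forall i, bits (f z) i = bits (f x) i \/ bits (f z) i = bits (f y) i.
Proof.
  intros Hf x y z. rewrite (interval_d _ _ Hf). apply ham_between.
Qed.

Definition seteq {G : Graph} (A B : vset G) := forall v, A v <-> B v.

Lemma hull_ext (G : Graph) (A B : vset G) : seteq A B -> forall z, hull G A z -> hull G B z.
Proof. intros E z H Bc Hc Hs. apply H; auto. intros v Hv; apply Hs, E, Hv. Qed.

Lemma Iset_ext (G : Graph) (A B : vset G) : seteq A B -> forall z, Iset G A z -> Iset G B z.
Proof. intros E z (x&y&Hx&Hy&Hi). exists x, y. repeat split; auto; apply E; auto. Qed.

Lemma hull_convex (G : Graph) A : convex G (hull G A).
Proof. intros x y z Hx Hy Hi B HB Hs. apply (HB x y z); [apply Hx|apply Hy|]; auto. Qed.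

Lemma hull_incl (G : Graph) (A : vset G) : forall v, A v -> hull G A v.
Proof. intros v Hv B HB Hs. auto. Qed.

Lemma hull_min (G : Graph) (A B : vset G) : convex G B -> (forall v, A v -> B v) -> forall v, hull G A v -> B v.
Proof. intros HB Hs v Hv. apply Hv; auto. Qed.

Lemma interval_refl (G : Graph) (x : V G) : interval G x x x.
Proof. exists 0, 0. split. constructor. split. constructor. intros; lia. Qed.

Lemma Iset_incl (G : Graph) (A : vset G) : forall v, A v -> Iset G A v.
Proof. intros v Hv. exists v, v. repeat split; auto. apply interval_refl. Qed.

Lemma Iset_hull (G : Graph) (A : vset G) : forall v, Iset G A v -> hull G A v.
Proof. intros v (x&y&Hx&Hy&Hi) B HB Hs. apply (HB x y v); auto. Qed.

Definition copointIn (G : Graph) (S C : vset G) (x : V G) : Prop :=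
  (forall v, C v -> S v) /\ convex G C /\ ~ C x /\
  forall D : vset G, (forall v, D v -> S v) -> convex G D -> ~ D x ->
    (forall v, C v -> D v) -> forall v, D v -> C v.

Definition ph1 (G : Graph) (S : vset G) : Prop :=
  forall x C, S x -> copointIn G S C x ->
    forall z, hull G (add1 G C x) z -> Iset G (add1 G C x) z.

Lemma ph_le1_iff (K : Graph) : ph_le1 K <-> ph1 K (fun _ => True).
Proof.
  split.
  - intros [n [Hn Hw]] x C _ [H1 [H2 [H3 H4]]] z Hz.
    assert (Hc : copoint K C x). { split; auto. split; auto. intros D HD HDx HCD v Hv. apply (H4 D); auto. }
    pose proof (proj1 (Hw x C Hc z) Hz) as Hz'.
    destruct n as [|[|n]]; [apply Iset_incl; exact Hz'| exact Hz'| lia].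
  - intros H. exists 1. split; auto. unfold ph_works. intros x C [H1 [H2 H3]] z. simpl. split.
    + apply H; auto. split; [intros; exact I|]. split; auto. split; auto. intros D _ HD HDx HCD v Hv. apply (H3 D); auto.
    + apply Iset_hull.
Qed.

Definition cemb (H G : Graph) (phi : V H -> V G) : Prop :=
  (forall x y, phi x = phi y -> x = y) /\ (forall x y, adj H x y <-> adj G (phi x) (phi y)) /\
  convex G (fun w => exists x, phi x = w).

Definition img {H G : Graph} (phi : V H -> V G) (S : vset H) : vset G :=
  fun w => exists x, S x /\ phi x = w.

Section Cemb.
Variables H G : Graph.
Variable phi : V H -> V G.
Hypothesis Hc : cemb H G phi.

Lemma cemb_inj : forall x y, phi x = phi y -> x = y. Proof. apply Hc. Qed.
Lemma cemb_adj : forall x y, adj H x y <-> adj G (phi x) (phi y). Proof. apply Hc. Qed.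
Lemma cemb_conv : convex G (fun w => exists x, phi x = w). Proof. apply Hc. Qed.

Lemma cemb_walk : forall n x y, walk H n x y -> walk G n (phi x) (phi y).
Proof. apply walk_map. intros; apply cemb_adj; auto. Qed.

Lemma shortest_lift : forall m u v, walk G m u v -> (forall k, walk G k u v -> m <= k) ->
  forall x y, phi x = u -> phi y = v -> walk H m x y.
Proof.
  induction m; intros u v Hw Hmin x y Hx Hy.
  - apply walk0_eq in Hw. subst v. rewrite <- Hy in Hx. apply cemb_inj in Hx. subst. constructor.
  - apply walkS_inv in Hw. destruct Hw as [w [Hw1 Hw2]].
    assert (Hi : interval G u v w).
    { exists 1, m. split. apply walk1; auto. split; auto. }
    destruct (cemb_conv u v w) as [x' Hx']; eauto.
    econstructor. apply cemb_adj. rewrite Hx, Hx'. eauto.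
    apply IHm with w v; auto.
    intros k Hk. assert (S m <= S k). apply Hmin. econstructor; eauto. lia.
Qed.

Lemma cemb_walk_back : forall n x y, walk G n (phi x) (phi y) -> exists m, m <= n /\ walk H m x y.
Proof.
  intros n x y Hw.
  destruct (ex_min (fun k => walk G k (phi x) (phi y))) as [m [Hm Hmin]]; eauto.
  exists m. split; auto. apply shortest_lift with (phi x) (phi y); auto.
Qed.

Lemma cemb_interval : forall x y z, interval H x y z <-> interval G (phi x) (phi y) (phi z).
Proof.
  intros x y z; split.
  - intros [n [m [H1 [H2 H3]]]]. exists n, m. split. apply cemb_walk; auto. split. apply cemb_walk; auto.
    intros k Hk. apply cemb_walk_back in Hk. destruct Hk as [k' [Hk' Hw]]. pose proof (H3 _ Hw). lia.
  - intros [n [m [H1 [H2 H3]]]].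
    apply cemb_walk_back in H1. destruct H1 as [n' [Hn' H1]].
    apply cemb_walk_back in H2. destruct H2 as [m' [Hm' H2]].
    exists n', m'. split; auto. split; auto. intros k Hk. apply cemb_walk in Hk. pose proof (H3 _ Hk). lia.
Qed.

Lemma cemb_interval_img : forall x y w, interval G (phi x) (phi y) w -> exists z, phi z = w.
Proof. intros x y w Hi. apply (cemb_conv (phi x) (phi y) w); eauto. Qed.

Lemma cemb_dfun : forall d, dfun G d -> dfun H (fun x y => d (phi x) (phi y)).
Proof.
  intros d Hd. split.
  - intros x y. destruct (cemb_walk_back _ x y (d_walk _ _ Hd (phi x) (phi y))) as [m [Hm Hw]].
    pose proof (d_low _ _ Hd _ _ _ (cemb_walk _ _ _ Hw)).
    replace (d (phi x) (phi y)) with m by lia. auto.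
  - intros x y k Hk. apply (d_low _ _ Hd). apply cemb_walk; auto.
Qed.

Lemma cemb_pc : partial_cube G -> partial_cube H.
Proof.
  intros HG. apply pc_to_emb in HG. destruct HG as [I [f Hf]].
  apply emb_to_pc with I (fun x => f (phi x)). apply (cemb_dfun _ Hf).
Qed.

Lemma cemb_convex : forall S, convex H S <-> convex G (img phi S).
Proof.
  intros S; split.
  - intros HS a b w [x [Hx <-]] [y [Hy <-]] Hi.
    destruct (cemb_interval_img _ _ _ Hi) as [z <-]. exists z. split; auto.
    apply (HS x y z); auto. apply cemb_interval; auto.
  - intros HS x y z Hx Hy Hi. apply cemb_interval in Hi.
    assert (img phi S (phi z)) as [z' [Hz' E]].
    { apply (HS (phi x) (phi y)); auto; [exists x | exists y]; auto. }
    apply cemb_inj in E. subst; auto.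
Qed.

Lemma cemb_preimage_convex : forall B, convex G B -> convex H (fun v => B (phi v)).
Proof. intros B HB x y z Hx Hy Hi. apply cemb_interval in Hi. exact (HB _ _ _ Hx Hy Hi). Qed.

Lemma cemb_hull : forall X z, hull H X z <-> hull G (img phi X) (phi z).
Proof.
  intros X z; split.
  - intros Hz B HB Hs. apply (Hz (fun v => B (phi v))).
    apply cemb_preimage_convex; auto. intros v Hv. apply Hs. exists v; split; auto.
  - intros Hz B HB Hs. assert (img phi B (phi z)).
    { apply Hz. apply cemb_convex; auto. intros w [x [Hx <-]]. exists x; split; auto. }
    destruct H0 as [z' [Hz' E]]. apply cemb_inj in E; subst; auto.
Qed.

Lemma cemb_hull_img : forall X w, hull G (img phi X) w -> exists z, phi z = w.
Proof.
  intros X w Hw. apply (Hw (fun w => exists x, phi x = w)). apply cemb_conv.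
  intros v [x [_ <-]]; eauto.
Qed.

Lemma cemb_Iset : forall X z, Iset H X z <-> Iset G (img phi X) (phi z).
Proof.
  intros X z; split.
  - intros (x&y&Hx&Hy&Hi). exists (phi x), (phi y). split. exists x; split; auto. split. exists y; split; auto.
    apply cemb_interval; auto.
  - intros (a&b&[x [Hx <-]]&[y [Hy <-]]&Hi). exists x, y. repeat split; auto. apply cemb_interval; auto.
Qed.

Lemma cemb_ph1 : forall S, ph1 H S <-> ph1 G (img phi S).
Proof.
  intros S; split.
  - intros Hph x' C' [x [Sx <-]] [C1 [C2 [C3 C4]]] w Hw.
    set (C := fun v => C' (phi v)).
    assert (HC : copointIn H S C x).
    { split. intros v Hv. destruct (C1 _ Hv) as [v' [Hv' E]]. apply cemb_inj in E; subst; auto.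
      split. apply cemb_preimage_convex; auto. split. auto.
      intros D HD1 HD2 HD3 HD4 v Hv. apply (C4 (img phi D)).
      intros w' [u [Hu <-]]. exists u; split; auto. apply cemb_convex; auto.
      intros [u [Hu E]]. apply cemb_inj in E; subst; auto.
      intros c Hc'. destruct (C1 _ Hc') as [u [Hu <-]]. exists u; split; [apply HD4; exact Hc' | reflexivity].
      exists v; split; auto. }
    assert (E : seteq (add1 G C' (phi x)) (img phi (add1 H C x))).
    { intros v; split.
      - intros [Hv| ->]. destruct (C1 _ Hv) as [u [Hu <-]]. exists u; split; auto. left; apply Hv.
        exists x; split; auto. right; auto.
      - intros [u [[Hu| ->] <-]]. left; auto. right; auto. }
    apply (hull_ext _ _ _ E) in Hw. destruct (cemb_hull_img _ _ Hw) as [z <-].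
    apply cemb_hull in Hw. apply (Hph x C Sx HC) in Hw. apply cemb_Iset in Hw.
    apply Iset_ext with (img phi (add1 H C x)); auto. intros v; split; apply E.
  - intros Hph x C Sx [C1 [C2 [C3 C4]]] z Hz.
    assert (HC : copointIn G (img phi S) (img phi C) (phi x)).
    { split. intros w [u [Hu <-]]. exists u; split; auto.
      split. apply cemb_convex; auto. split. intros [u [Hu E]]. apply cemb_inj in E; subst; auto.
      intros D HD1 HD2 HD3 HD4 w Hw. destruct (HD1 _ Hw) as [u [Hu <-]]. exists u; split; auto.
      apply (C4 (fun v => D (phi v))); auto. intros v Hv. destruct (HD1 _ Hv) as [u' [Hu' E]].
      apply cemb_inj in E; subst; auto. apply cemb_preimage_convex; auto.
      intros c Hc'. apply HD4. exists c; split; auto. }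
    assert (E : seteq (add1 G (img phi C) (phi x)) (img phi (add1 H C x))).
    { intros v; split.
      - intros [[u [Hu <-]]| ->]. exists u; split; auto. left; auto. exists x; split; auto. right; auto.
      - intros [u [[Hu| ->] <-]]. left; exists u; split; auto. right; auto. }
    apply cemb_hull in Hz. apply hull_ext with (B := add1 G (img phi C) (phi x)) in Hz.
    apply (Hph (phi x) (img phi C)) in Hz; auto. apply cemb_Iset.
    apply Iset_ext with (add1 G (img phi C) (phi x)); auto. exists x; split; auto.
    intros v; split; apply E.
Qed.

End Cemb.

Lemma ph1_ext (G : Graph) (S S' : vset G) : seteq S S' -> ph1 G S -> ph1 G S'.
Proof.
  intros E H x C Sx [C1 [C2 [C3 C4]]]. apply H. apply E; auto.
  split. intros v Hv; apply E; auto. split; auto. split; auto.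
  intros D HD1 HD2 HD3 HD4. apply C4; auto. intros v Hv; apply E; auto.
Qed.

Definition ival (G : Graph) (S : vset G) : V (induced G S) -> V G := fun x => proj1_sig x.

Lemma cemb_induced (G : Graph) (S : vset G) : convex G S -> cemb (induced G S) G (ival G S).
Proof.
  intros HS. split; [|split].
  - intros [x Hx] [y Hy]; simpl; intros ->. f_equal; apply proof_irrelevance.
  - intros x y; simpl; tauto.
  - intros a b w [[x Hx] <-] [[y Hy] <-] Hi. simpl in *. exists (exist _ w (HS x y w Hx Hy Hi)). reflexivity.
Qed.

Lemma img_full_induced (G : Graph) (S : vset G) :
  seteq (img (ival G S) (fun _ : V (induced G S) => True)) S.
Proof.
  intros v; split. intros [[x Hx] [_ <-]]; auto. intros Hv. exists (exist _ v Hv). simpl; auto.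
Qed.

Lemma ph_le1_induced (G : Graph) (S : vset G) : convex G S -> (ph_le1 (induced G S) <-> ph1 G S).
Proof.
  intros HS. rewrite ph_le1_iff. rewrite (cemb_ph1 _ _ _ (cemb_induced G S HS)).
  split; apply ph1_ext; intros v; [|symmetry]; apply img_full_induced.
Qed.

Lemma ph_hom_iff (G : Graph) : ph_homogeneous G <-> forall S, convex G S -> finite_set G S -> ph1 G S.
Proof.
  split; intros H S HS Hf; [apply ph_le1_induced| apply ph_le1_induced]; auto.
Qed.

Lemma cemb_comp (K H G : Graph) psi phi : cemb K H psi -> cemb H G phi -> cemb K G (fun x => phi (psi x)).
Proof.
  intros H1 H2. split; [|split].
  - intros x y E. apply (cemb_inj _ _ _ H1). apply (cemb_inj _ _ _ H2). auto.
  - intros x y. rewrite (cemb_adj _ _ _ H1), (cemb_adj _ _ _ H2). tauto.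
  - intros a b w [x <-] [y <-] Hi.
    destruct (cemb_interval_img _ _ _ H2 _ _ _ Hi) as [z <-].
    apply (cemb_interval _ _ _ H2) in Hi.
    destruct (cemb_interval_img _ _ _ H1 _ _ _ Hi) as [u <-]. eauto.
Qed.

Lemma cemb_iso (H G : Graph) : graph_iso H G -> exists f, cemb H G f.
Proof.
  intros [f [Hi [Hs Ha]]]. exists f. split; auto. split; auto.
  intros a b w _ _ _. apply Hs.
Qed.

Lemma cemb_phhom (H G : Graph) phi : cemb H G phi -> ph_homogeneous G -> ph_homogeneous H.
Proof.
  intros Hc HG. apply ph_hom_iff. intros S HS [l Hl]. apply (cemb_ph1 _ _ _ Hc).
  apply ph_hom_iff; auto. apply (cemb_convex _ _ _ Hc); auto.
  exists (map phi l). intros w [x [Hx <-]]. apply in_map; auto.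
Qed.

Lemma cemb_phpc (H G : Graph) phi : cemb H G phi -> ph_hom_partial_cube G -> ph_hom_partial_cube H.
Proof.
  intros Hc [H1 H2]. split. apply (cemb_pc _ _ _ Hc); auto. apply (cemb_phhom _ _ _ Hc); auto.
Qed.

Lemma iso_phpc (H G : Graph) : graph_iso H G -> ph_hom_partial_cube G -> ph_hom_partial_cube H.
Proof. intros Hi. destruct (cemb_iso _ _ Hi) as [f Hf]. apply (cemb_phpc _ _ _ Hf). Qed.

Lemma part1 : forall (G : Graph) (S : vset G),
      ph_hom_partial_cube G -> convex G S -> ph_hom_partial_cube (induced G S).
Proof. intros G S H HS. apply (cemb_phpc _ _ _ (cemb_induced G S HS)); auto. Qed.

Lemma conv_inter (G : Graph) (A B : vset G) : convex G A -> convex G B -> convex G (fun v => A v /\ B v).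
Proof. intros HA HB x y z [] [] Hi. split; [apply (HA x y z)| apply (HB x y z)]; auto. Qed.

Section PC.
Variable G : Graph.
Variable I : Type.
Variable f : V G -> V (hypercube I).
Hypothesis Hf : pcemb G I f.

Definition dG (x y : V G) := ham (f x) (f y).

Lemma betw : forall x y z,
  interval G x y z <-> forall i, bits (f z) i = bits (f x) i \/ bits (f z) i = bits (f y) i.
Proof. apply pc_between; auto. Qed.

Lemma hs_convex : forall e b, convex G (fun v => bits (f v) e = b).
Proof.
  intros e b x y z Hx Hy Hi. rewrite betw in Hi. destruct (Hi e); congruence.
Qed.

Lemma f_inj : forall x y, f x = f y -> x = y.
Proof. intros x y E. apply (d_zero _ _ Hf). simpl. rewrite E. apply (d_refl _ _ (dfun_Q I)). Qed.

Lemma bits_inj : forall x y, (forall i, bits (f x) i = bits (f y) i) -> x = y.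
Proof. intros. apply f_inj, bits_eq; auto. Qed.

Lemma adj_unique : forall x y, adj G x y -> exists e, bits (f x) e <> bits (f y) e /\
   forall j, bits (f x) j <> bits (f y) j -> j = e.
Proof.
  intros x y A. assert (Hd : dG x y = 1).
  { pose proof (d_adj _ _ Hf _ _ A). unfold dG in *. simpl in H.
    destruct (ham (f x) (f y)) eqn:E; [|lia]. apply (d_zero _ _ Hf) in E. subst.
    apply adj_irrefl in A; contradiction. }
  pose proof (ham_walk (f x) (f y)). unfold dG in Hd. rewrite Hd in H.
  apply walkS_inv in H. destruct H as [w [Hw H0]]. apply walk0_eq in H0. subst.
  apply Q_adj; auto.
Qed.

Lemma copoint_hs : forall S C x c0, convex G S -> S x -> copointIn G S C x -> C c0 ->
  exists e, forall v, C v <-> (S v /\ bits (f v) e <> bits (f x) e).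
Proof.
  intros S C x c0 HS Sx [C1 [C2 [C3 C4]]] Cc0.
  destruct (ex_min (fun n => exists c, C c /\ dG c x = n)) as [n [[c [Cc Hn]] Hmin]]; eauto.
  destruct n as [|n].
  { apply (d_zero _ _ Hf) in Hn. subst. contradiction. }
  pose proof (d_walk _ _ Hf c x) as Hw. simpl in Hw. fold (dG c x) in Hw. rewrite Hn in Hw.
  apply walkS_inv in Hw. destruct Hw as [y [Acy Wyx]].
  assert (Hyx : dG y x <= n) by (apply (d_low _ _ Hf); auto).
  assert (Hcy : dG c y <= 1) by (apply (d_adj _ _ Hf); auto).
  assert (Htri : dG c x <= dG c y + dG y x) by (apply (d_tri _ _ Hf)).
  assert (Iy : interval G c x y) by (apply (interval_d _ _ Hf); unfold dG in *; simpl; lia).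
  assert (Sy : S y) by (apply (HS c x y); auto).
  assert (nCy : ~ C y). { intros Cy. assert (Datatypes.S n <= dG y x) by (apply Hmin; eauto). lia. }
  destruct (adj_unique _ _ Acy) as [e [He Hu]].
  assert (Hxe : bits (f x) e = bits (f y) e).
  { rewrite betw in Iy. destruct (Iy e); congruence. }
  assert (HCe : forall v, C v -> bits (f v) e = bits (f c) e).
  { intros v Cv. destruct (bool_dec (bits (f v) e) (bits (f c) e)) as [|Hne]; auto.
    exfalso. apply nCy. apply (C2 c v y); auto. apply betw. intros i.
    destruct (bool_dec (bits (f y) i) (bits (f c) i)) as [|Hi]; auto.
    assert (i = e) by (apply Hu; auto). subst. right.
    destruct (bits (f y) e), (bits (f c) e), (bits (f v) e); congruence. }
  exists e. intros v. split.
  - intros Cv. split; auto. rewrite HCe; auto. rewrite Hxe; auto.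
  - intros [Sv Hv]. refine (C4 (fun v => S v /\ bits (f v) e = bits (f c) e) _ _ _ _ v _).
    + intros w [Hw _]; auto.
    + apply conv_inter; auto. apply hs_convex.
    + intros [_ Hx']. rewrite Hxe in Hx'. auto.
    + intros w Cw. split; auto.
    + split; auto. rewrite Hxe in Hv. destruct (bits (f v) e), (bits (f y) e), (bits (f c) e); congruence.
Qed.

End PC.

Lemma ham_zero_iff {I : Type} (s t : V (hypercube I)) : ham s t = 0 <-> forall p, bits s p = bits t p.
Proof.
  split.
  - intros H. apply (d_zero _ _ (dfun_Q I)) in H. subst; auto.
  - intros H. apply bits_eq in H. subst. apply (d_refl _ _ (dfun_Q I)).
Qed.

Lemma ham_le1 {I : Type} (s t : V (hypercube I)) p0 :
  (forall p, bits s p <> bits t p -> p = p0) -> ham s t <= 1.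
Proof.
  intros H. unfold ham. unfold cntL. apply len_single with p0.
  apply NoDup_filter, NoDup_nodup.
  intros x Hx. apply filter_In in Hx. destruct Hx as [_ Hx]. apply dif_true in Hx; auto.
Qed.

Lemma cnt_lt {I : Type} (L : list I) s s' t p0 :
  In p0 L -> NoDup L -> (forall p, s' p <> s p -> p = p0) -> s' p0 = t p0 -> s p0 <> t p0 ->
  cntL L s' t < cntL L s t.
Proof.
  induction L as [|a L IH]; intros Hin N H1 H2 H3; [destruct Hin|].
  inversion N; subst. rewrite !cnt_cons. destruct Hin as [<-|Hin].
  - rewrite H2. unfold dif at 1. rewrite Bool.eqb_reflx. simpl.
    assert (dif (s a) (t a) = true) as -> by (apply dif_true; auto).
    assert (cntL L s' t = cntL L s t). { apply cnt_ext. intros i Hi. split; auto.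
      destruct (bool_dec (s' i) (s i)); auto. apply H1 in n. subst. contradiction. }
    lia.
  - assert (s' a = s a). { destruct (bool_dec (s' a) (s a)); auto. apply H1 in n. subst. contradiction. }
    rewrite H. specialize (IH Hin H5 H1 H2 H3). destruct (dif (s a) (t a)); lia.
Qed.

Lemma ham_lt {I : Type} (s s' t : V (hypercube I)) p0 :
  (forall p, bits s' p <> bits s p -> p = p0) -> bits s' p0 = bits t p0 -> bits s p0 <> bits t p0 ->
  ham s' t < ham s t.
Proof.
  intros H1 H2 H3. destruct (L3_cov s s' t) as (C1&C2&C3&_).
  rewrite (ham_L s t _ (L3_nd s s' t) C3), (ham_L s' t _ (L3_nd s s' t) C2).
  apply cnt_lt with p0; auto. apply L3_nd.
Qed.

Lemma pc_crit (G : Graph) (I : Type) (f : V G -> V (hypercube I)) :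
  (forall x y, adj G x y -> ham (f x) (f y) <= 1) ->
  (forall x y, ham (f x) (f y) = 0 -> x = y) ->
  (forall x y, 0 < ham (f x) (f y) -> exists x', adj G x x' /\ ham (f x') (f y) < ham (f x) (f y)) ->
  pcemb G I f.
Proof.
  intros H1 H2 H3. split.
  - intros x y. remember (ham (f x) (f y)) as n. revert x Heqn.
    induction n as [n IH] using (well_founded_induction lt_wf). intros x Hn.
    destruct n as [|n].
    + symmetry in Hn. apply H2 in Hn. subst. constructor.
    + destruct (H3 x y) as [x' [A Hl]]; [lia|].
      pose proof (H1 _ _ A). pose proof (cnt_ham_tri (f x) (f x') (f y)).
      econstructor; eauto. apply (IH n); lia.
  - intros x y k Hw. induction Hw. simpl. rewrite (d_refl _ _ (dfun_Q I)). auto.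
    pose proof (H1 _ _ H). pose proof (cnt_ham_tri (f x) (f y) (f z)). lia.
Qed.

Lemma bool_neq_eq : forall a b c : bool, a <> b -> a <> c -> b = c.
Proof. destruct a, b, c; congruence. Qed.

Definition Jsig (I : Type) (F : I -> Graph) (HF : forall i, partial_cube (F i)) (i : I) :
  {J : Type & {f : V (F i) -> V (hypercube J) | pcemb (F i) J f}}.
Proof.
  destruct (constructive_indefinite_description _ (pc_to_emb _ (HF i))) as [J HJ].
  destruct (constructive_indefinite_description _ HJ) as [f Hf].
  exact (existT _ J (exist _ f Hf)).
Defined.

Lemma xorb_r_inj : forall a a' c, xorb a c = xorb a' c <-> a = a'.
Proof. destruct a, a', c; simpl; split; congruence. Qed.

Section Prod.
Variable I : Type.
Variable F : I -> Graph.
Hypothesis HF : forall i, ph_hom_partial_cube (F i).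

Definition HFpc (i : I) : partial_cube (F i) := proj1 (HF i).
Definition Jf (i : I) : Type := projT1 (Jsig I F HFpc i).
Definition ff (i : I) : V (F i) -> V (hypercube (Jf i)) := proj1_sig (projT2 (Jsig I F HFpc i)).
Lemma Hff (i : I) : pcemb (F i) (Jf i) (ff i).
Proof. exact (proj2_sig (projT2 (Jsig I F HFpc i))). Qed.

Definition CP := cart_prod I F.

Definition upd (x : forall k, V (F k)) (i : I) (a : V (F i)) : forall k, V (F k) :=
  fun k => match eqdec k i with left E => eq_rect_r (fun k => V (F k)) a E | right _ => x k end.

Lemma upd_eq x i a : upd x i a i = a.
Proof.
  unfold upd. destruct (eqdec i i) as [E|n]; [|congruence].
  rewrite (proof_irrelevance _ E eq_refl). reflexivity.
Qed.

Lemma upd_neq x i a k : k <> i -> upd x i a k = x k.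
Proof. intros H. unfold upd. destruct (eqdec k i); [contradiction|reflexivity]. Qed.

Lemma upd_upd x i a a' : upd (upd x i a) i a' = upd x i a'.
Proof.
  apply functional_extensionality_dep. intros k. destruct (eqdec k i) as [->|n].
  rewrite !upd_eq; auto. rewrite !upd_neq; auto.
Qed.

Lemma upd_same x i : upd x i (x i) = x.
Proof.
  apply functional_extensionality_dep. intros k. destruct (eqdec k i) as [->|n].
  rewrite !upd_eq; auto. rewrite !upd_neq; auto.
Qed.

Lemma adj_CP (x y : V CP) : adj CP x y <-> exists i, adj (F i) (x i) (y i) /\ forall j, j <> i -> x j = y j.
Proof. simpl. tauto. Qed.

Lemma adj_upd (x : V CP) i a : adj (F i) (x i) a -> adj CP x (upd x i a).
Proof.
  intros A. apply adj_CP. exists i. rewrite upd_eq. split; auto. intros j Hj. rewrite upd_neq; auto.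
Qed.

Lemma walk_upd i : forall n (a0 a : V (F i)), walk (F i) n a0 a ->
  forall x : V CP, x i = a0 -> walk CP n x (upd x i a).
Proof.
  induction 1; intros w Hw.
  - subst. rewrite upd_same. constructor.
  - econstructor. apply (adj_upd w i y). rewrite Hw; auto.
    rewrite <- (upd_upd w i y z). apply IHwalk. apply upd_eq.
Qed.

Lemma conn_F i (a a' : V (F i)) : exists n, walk (F i) n a a'.
Proof. eexists. apply (d_walk _ _ (Hff i)). Qed.

Lemma walk_upd' (x : V CP) i a : exists n, walk CP n x (upd x i a).
Proof. destruct (conn_F i (x i) a) as [n Hn]. exists n. apply (walk_upd i n (x i) a Hn); auto. Qed.

Lemma reach_diff (b : V CP) : forall n x, walk CP n b x -> exists L, forall i, x i <> b i -> In i L.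
Proof.
  intros n x Hw. apply walk_rev in Hw. induction Hw.
  - exists []. intros i H; congruence.
  - destruct IHHw as [L HL]. apply adj_CP in H. destruct H as [i [_ Hi]].
    exists (i :: L). intros j Hj. destruct (eqdec j i) as [->|n']. left; auto.
    right. apply HL. rewrite <- Hi; auto.
Qed.

Variable b : V CP.
Definition reach (x : V CP) : Prop := exists n, walk CP n b x.
Definition W := weak_prod I F b.

Definition co (v : V W) (i : I) : V (F i) := proj1_sig v i.

Lemma reach_upd (x : V CP) i a : reach x -> reach (upd x i a).
Proof.
  intros [n Hn]. destruct (walk_upd' x i a) as [m Hm]. exists (n + m). eapply walk_app; eauto.
Qed.

Definition updW (v : V W) i a : V W := exist _ (upd (proj1_sig v) i a) (reach_upd _ i a (proj2_sig v)).

Lemma co_updW_eq v i a : co (updW v i a) i = a.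
Proof. apply upd_eq. Qed.
Lemma co_updW_neq v i a k : k <> i -> co (updW v i a) k = co v k.
Proof. apply upd_neq. Qed.

Lemma W_eq (v w : V W) : (forall i, co v i = co w i) -> v = w.
Proof.
  destruct v as [x Hx], w as [y Hy]. unfold co; simpl. intros H.
  assert (x = y) by (apply functional_extensionality_dep; auto). subst. f_equal. apply proof_irrelevance.
Qed.

Lemma adj_W (v w : V W) : adj W v w <-> exists i, adj (F i) (co v i) (co w i) /\ forall j, j <> i -> co v j = co w j.
Proof. simpl. unfold co. tauto. Qed.

Definition J := {i : I & Jf i}.

Definition FFbits (x : V CP) (p : J) : bool :=
  xorb (bits (ff (projT1 p) (x (projT1 p))) (projT2 p)) (bits (ff (projT1 p) (b (projT1 p))) (projT2 p)).

Lemma FF_supp (v : V W) : finite_support J (FFbits (proj1_sig v)).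
Proof.
  destruct v as [x Hx]. simpl. destruct Hx as [n Hn]. destruct (reach_diff b n x Hn) as [L HL].
  exists (flat_map (fun i => map (fun j => existT (fun i => Jf i) i j) (suppl (ff i (x i)) ++ suppl (ff i (b i)))) L).
  intros [i j] H. unfold FFbits in H; simpl in H. apply in_flat_map. exists i. split.
  - apply HL. intros E. rewrite E in H. rewrite xorb_nilpotent in H. discriminate.
  - apply in_map. apply in_or_app.
    destruct (bits (ff i (x i)) j) eqn:E1. left; apply suppl_spec; auto.
    right; apply suppl_spec. simpl in H. auto.
Qed.

Definition FF (v : V W) : V (hypercube J) := exist _ (FFbits (proj1_sig v)) (FF_supp v).

Lemma bits_FF v i j : bits (FF v) (existT _ i j) = xorb (bits (ff i (co v i)) j) (bits (ff i (b i)) j).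
Proof. reflexivity. Qed.

Lemma HFF : pcemb W J FF.
Proof.
  apply pc_crit.
  - intros v w A. apply adj_W in A. destruct A as [i [A Ho]].
    destruct (adj_unique _ _ _ (Hff i) _ _ A) as [e [He Hu]].
    apply ham_le1 with (existT _ i e). intros [k j] H. rewrite !bits_FF in H.
    destruct (eqdec k i) as [->|n].
    + rewrite xorb_r_inj in H. rewrite (Hu j H). auto.
    + rewrite Ho in H; auto. contradiction.
  - intros v w H. rewrite ham_zero_iff in H. apply W_eq. intros i.
    apply (bits_inj _ _ _ (Hff i)). intros j. specialize (H (existT _ i j)). rewrite !bits_FF in H.
    apply xorb_r_inj in H. auto.
  - intros v w H. destruct (classic (exists p, bits (FF v) p <> bits (FF w) p)) as [[[i j] Hp]|Hno].
    2:{ exfalso. assert (ham (FF v) (FF w) = 0). apply ham_zero_iff. intros p.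
        destruct (bool_dec (bits (FF v) p) (bits (FF w) p)); auto. exfalso; apply Hno; eauto. lia. }
    rewrite !bits_FF, xorb_r_inj in Hp.
    set (d := fun a a' => ham (ff i a) (ff i a')).
    assert (Hd : dfun (F i) d) by apply Hff.
    destruct (d (co v i) (co w i)) as [|n] eqn:Ed.
    { apply (d_zero _ _ Hd) in Ed. rewrite Ed in Hp. contradiction. }
    pose proof (d_walk _ _ Hd (co v i) (co w i)) as Hw. rewrite Ed in Hw.
    apply walkS_inv in Hw. destruct Hw as [u [Au Wu]].
    assert (Iu : interval (F i) (co v i) (co w i) u).
    { apply (interval_d _ _ Hd). pose proof (d_low _ _ Hd _ _ _ Wu). pose proof (d_adj _ _ Hd _ _ Au).
      pose proof (d_tri _ _ Hd (co v i) u (co w i)). lia. }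
    destruct (adj_unique _ _ _ (Hff i) _ _ Au) as [e [He Hu]].
    rewrite (betw _ _ _ (Hff i)) in Iu.
    assert (Hue : bits (ff i u) e = bits (ff i (co w i)) e) by (destruct (Iu e); congruence).
    exists (updW v i u). split.
    + apply adj_W. exists i. rewrite co_updW_eq. split; auto. intros k Hk. rewrite co_updW_neq; auto.
    + apply ham_lt with (existT _ i e).
      * intros [k j'] Hk. rewrite !bits_FF in Hk. destruct (eqdec k i) as [->|n'].
        -- rewrite co_updW_eq, xorb_r_inj in Hk. rewrite (Hu j'); auto.
        -- rewrite co_updW_neq in Hk; auto. contradiction.
      * rewrite !bits_FF, co_updW_eq, xorb_r_inj; auto.
      * rewrite !bits_FF, xorb_r_inj. congruence.
Qed.

Lemma coord_between (v w z : V W) : interval W v w z <-> forall i, interval (F i) (co v i) (co w i) (co z i).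
Proof.
  rewrite (betw _ _ _ HFF). split.
  - intros H i. apply (betw _ _ _ (Hff i)). intros j. specialize (H (existT _ i j)).
    rewrite !bits_FF, !xorb_r_inj in H. auto.
  - intros H [i j]. specialize (H i). rewrite (betw _ _ _ (Hff i)) in H. rewrite !bits_FF, !xorb_r_inj. auto.
Qed.

Lemma dF i : dfun (F i) (fun a a' => ham (ff i a) (ff i a')).
Proof. apply Hff. Qed.

Lemma proj_convex k (B : vset (F k)) : convex (F k) B -> convex W (fun v => B (co v k)).
Proof. intros HB v w z Hv Hw Hi. rewrite coord_between in Hi. exact (HB _ _ _ Hv Hw (Hi k)). Qed.

Lemma updW_between (x z : V W) k a : interval (F k) (co x k) a (co z k) -> interval W x (updW z k a) z.
Proof.
  intros H. apply coord_between. intros i. destruct (eqdec i k) as [->|n].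
  rewrite co_updW_eq; auto. rewrite co_updW_neq; auto. apply (interval_r _ _ (dF i)).
Qed.

Lemma prod_closed (S : vset W) k : convex W S -> forall s s', S s -> S s' -> S (updW s k (co s' k)).
Proof.
  intros HS s s' Hs Hs'. apply (HS s s'); auto. apply coord_between. intros i.
  destruct (eqdec i k) as [->|n]. rewrite co_updW_eq. apply (interval_r _ _ (dF k)).
  rewrite co_updW_neq; auto. apply (interval_l _ _ (dF i)).
Qed.

Lemma W_ph1 (S : vset W) : convex W S -> finite_set W S -> ph1 W S.
Proof.
  intros HS [l Hl] x C Sx HC z Hz.
  destruct (classic (exists c0, C c0)) as [[c0 Cc0]|Hno].
  2:{ assert (z = x).
      { apply (hull_min _ _ (fun v => v = x)) in Hz; auto.
        - intros u w t -> -> Hi. apply (interval_xx _ _ HFF) in Hi; auto.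
        - intros v [Hv| ->]; auto. exfalso; eauto. }
      subst. apply Iset_incl. right; auto. }
  destruct (copoint_hs W J FF HFF S C x c0 HS Sx HC Cc0) as [[k j] Hp].
  set (beta := bits (ff k (co x k)) j).
  assert (HCc : forall v, C v <-> S v /\ bits (ff k (co v k)) j = negb beta).
  { intros v. rewrite Hp, !bits_FF. split; intros [Hv H]; split; auto.
    - rewrite xorb_r_inj in H. unfold beta. destruct (bits (ff k (co v k)) j), (bits (ff k (co x k)) j); simpl; congruence.
    - rewrite xorb_r_inj. rewrite H. unfold beta. destruct (bits (ff k (co x k)) j); simpl; congruence. }
  destruct HC as [C1 [C2 [C3 C4]]].
  set (Sk := fun a : V (F k) => exists s, S s /\ co s k = a).
  assert (Sk_conv : convex (F k) Sk).
  { intros a a' t [s [Hs <-]] [s' [Hs' <-]] Ht.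
    exists (updW s k t). split; [|apply co_updW_eq].
    apply (HS s (updW s k (co s' k))); auto. apply prod_closed; auto.
    apply coord_between. intros i. destruct (eqdec i k) as [->|n].
    rewrite !co_updW_eq; auto. rewrite !co_updW_neq; auto. apply (interval_l _ _ (dF i)). }
  assert (Sk_fin : finite_set (F k) Sk).
  { exists (map (fun s => co s k) l). intros a [s [Hs <-]]. apply (in_map (fun s0 => co s0 k)); auto. }
  assert (Hph : ph1 (F k) Sk) by (apply ph_hom_iff; auto; apply (HF k)).
  set (Ck := fun a => Sk a /\ bits (ff k a) j = negb beta).
  assert (HCk : copointIn (F k) Sk Ck (co x k)).
  { split. intros a [Ha _]; auto. split. apply conv_inter; auto. apply (hs_convex _ _ _ (Hff k)).
    split. intros [_ H]. fold beta in H. destruct beta; discriminate.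
    intros D D1 D2 D3 D4 a Da. destruct (D1 a Da) as [s [Hs Ha]].
    assert (HK : C (updW x k a)).
    { apply (C4 (fun v => S v /\ D (co v k))).
      - intros v [Hv _]; auto.
      - apply conv_inter; auto. apply proj_convex; auto.
      - intros [_ H]; auto.
      - intros c Cc. split; auto. apply D4. split. exists c; auto. apply HCc; auto.
      - split. rewrite <- Ha. apply prod_closed; auto. rewrite co_updW_eq; auto. }
    apply HCc in HK. destruct HK as [_ HK]. rewrite co_updW_eq in HK. split; [exists s; split; auto | exact HK]. }
  assert (Hz' : S z /\ hull (F k) (add1 (F k) Ck (co x k)) (co z k)).
  { apply (hull_min _ _ (fun v => S v /\ hull (F k) (add1 (F k) Ck (co x k)) (co v k))) in Hz; auto.
    - apply conv_inter; auto. apply proj_convex. apply hull_convex.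
    - intros v [Cv| ->].
      + split; auto. apply hull_incl. left. split. exists v; auto. apply HCc; auto.
      + split; auto. apply hull_incl. right; auto. }
  destruct Hz' as [Sz Hzk].
  apply (Hph (co x k) Ck) in Hzk; auto; [|exists x; auto].
  destruct (classic (C z)) as [Cz|nCz].
  { apply Iset_incl. left; auto. }
  assert (Ha : exists a, Ck a /\ interval (F k) (co x k) a (co z k)).
  { destruct Hzk as (a1 & a2 & H1 & H2 & Hi).
    destruct H1 as [H1| ->]; destruct H2 as [H2| ->].
    - exfalso. apply nCz. apply HCc. split; auto.
      assert (Ck (co z k)) by (apply (conv_inter _ _ _ Sk_conv (hs_convex _ _ _ (Hff k) j (negb beta)) a1 a2); auto).
      apply H.
    - exists a1. split; auto. apply (interval_sym _ _ (dF k)); auto.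
    - exists a2; auto.
    - apply (interval_xx _ _ (dF k)) in Hi. rewrite Hi. exists (co c0 k). split.
      split. exists c0; split; auto. apply HCc; auto. apply (interval_l _ _ (dF k)). }
  destruct Ha as [a [[[s [Hs Has]] Hab] Hi]].
  exists x, (updW z k a). split. right; auto. split.
  - left. apply HCc. split. rewrite <- Has. apply prod_closed; auto. rewrite co_updW_eq; auto.
  - apply updW_between; auto.
Qed.

Lemma W_phpc : ph_hom_partial_cube W.
Proof.
  split. apply emb_to_pc with J FF. apply HFF.
  apply ph_hom_iff. apply W_ph1.
Qed.

End Prod.

Lemma empty_phpc (G : Graph) : ~ (exists x : V G, True) -> ph_hom_partial_cube G.
Proof.
  intros Hno. split.
  - apply emb_to_pc with unit (fun x => False_rect _ (Hno (ex_intro _ x I))).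
    split; intros x; exfalso; apply Hno; eauto.
  - apply ph_hom_iff. intros S _ _ x. exfalso; apply Hno; eauto.
Qed.

Lemma part4 : forall (I : Type) (F : I -> Graph),
      ~ finite_type I -> (forall i, ph_hom_partial_cube (F i)) ->
      forall b : V (cart_prod I F), ph_hom_partial_cube (weak_prod I F b).
Proof. intros I F _ HF b. exact (W_phpc I F HF b). Qed.

Lemma reach_all (I : Type) (F : I -> Graph) (HF : forall i, ph_hom_partial_cube (F i)) (b : V (cart_prod I F)) :
  forall L (x : V (cart_prod I F)), (forall i, x i <> b i -> In i L) -> reach I F b x.
Proof.
  induction L as [|i L IH]; intros x H.
  - assert (x = b). { apply functional_extensionality_dep. intros i. apply NNPP. intros n. apply (H i n). }
    subst. exists 0. constructor.
  - assert (Hx : x = upd I F (upd I F x i (b i)) i (x i)) by (rewrite upd_upd, upd_same; auto).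
    rewrite Hx. apply (reach_upd I F HF). apply IH. intros j Hj. destruct (eqdec j i) as [->|n].
    rewrite upd_eq in Hj. congruence. rewrite upd_neq in Hj; auto. destruct (H j Hj); auto. congruence.
Qed.

Lemma part3 : forall (I : Type) (F : I -> Graph),
      finite_type I -> (forall i, ph_hom_partial_cube (F i)) ->
      ph_hom_partial_cube (cart_prod I F).
Proof.
  intros I F [L HL] HF. destruct (classic (exists x : V (cart_prod I F), True)) as [[b _]|Hno].
  2:{ apply empty_phpc; auto. }
  apply iso_phpc with (weak_prod I F b); [|apply (W_phpc I F HF b)].
  assert (Hr : forall x, reach I F b x) by (intros x; apply (reach_all I F HF b L); auto).
  exists (fun x => exist _ x (Hr x) : V (weak_prod I F b)). split; [|split].
  - intros x y E. apply (f_equal (@proj1_sig _ _)) in E. auto.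
  - intros [y Hy]. exists y. f_equal. apply proof_irrelevance.
  - intros x y. simpl. tauto.
Qed.

Lemma conn_dfun (G : Graph) : (forall x y : V G, exists n, walk G n x y) -> exists d, dfun G d.
Proof.
  intros H.
  assert (Hm : forall x y : V G, exists n, walk G n x y /\ forall k, walk G k x y -> n <= k).
  { intros x y. apply ex_min. auto. }
  exists (fun x y => proj1_sig (constructive_indefinite_description _ (Hm x y))).
  split; intros x y; destruct (constructive_indefinite_description _ (Hm x y)) as [n [H1 H2]]; simpl; auto.
Qed.

Lemma dfun_unique (G : Graph) d d' : dfun G d -> dfun G d' -> forall x y, d x y = d' x y.
Proof.
  intros H H' x y. apply Nat.le_antisymm; [apply (d_low _ _ H); apply (d_walk _ _ H')|apply (d_low _ _ H'); apply (d_walk _ _ H)].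
Qed.

Lemma dfun_ext (G : Graph) d d' : dfun G d -> (forall x y, d x y = d' x y) -> dfun G d'.
Proof. intros [H1 H2] E. split; intros; rewrite <- E; auto. Qed.

Lemma gated_convex (G : Graph) d (Hd : dfun G d) (A : vset G) : gated G A -> convex G A.
Proof.
  intros HA x y z Hx Hy Hi. destruct (HA z) as [g [Ag Hg]].
  pose proof (Hg x Hx) as Hx'. pose proof (Hg y Hy) as Hy'.
  rewrite (interval_d _ _ Hd) in Hx', Hy', Hi.
  pose proof (d_tri _ _ Hd x g y). rewrite (d_sym _ _ Hd x z) in Hi. rewrite (d_sym _ _ Hd x g) in H.
  assert (d z g = 0) by lia. apply (d_zero _ _ Hd) in H0. subst; auto.
Qed.

Definition gate_of (G : Graph) (A : vset G) (HA : gated G A) (x : V G) : V G :=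
  proj1_sig (constructive_indefinite_description _ (HA x)).

Lemma gate_spec (G : Graph) (A : vset G) (HA : gated G A) (x : V G) :
  A (gate_of G A HA x) /\ forall z, A z -> interval G x z (gate_of G A HA x).
Proof. unfold gate_of. destruct (constructive_indefinite_description _ (HA x)); simpl; auto. Qed.

Definition nd {I : Type} (s t : V (hypercube I)) (j : I) : nat := if dif (bits s j) (bits t j) then 1 else 0.

Definition Lm {I : Type} (vs : list (V (hypercube I))) : list I := nodup eqdec (flat_map suppl vs).

Lemma ham_Lm {I : Type} (vs : list (V (hypercube I))) s t :
  In s vs -> In t vs -> ham s t = cntL (Lm vs) (bits s) (bits t).
Proof.
  intros Hs Ht. apply ham_L. apply NoDup_nodup. apply cov_supp; intros i Hi; apply nodup_In, in_flat_map; eauto.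
Qed.

Lemma cnt_comb {I : Type} (L : list I) a b c e a' b' :
  (forall j, (if dif (a j) (b j) then 1 else 0) = (if dif (c j) (e j) then 1 else 0) + (if dif (a' j) (b' j) then 1 else 0)) ->
  cntL L a b = cntL L c e + cntL L a' b'.
Proof. intros H. induction L as [|i L IH]; auto. rewrite !cnt_cons, IH, H. lia. Qed.

Lemma ham_comb {I : Type} (s t s' t' s'' t'' : V (hypercube I)) :
  (forall j, nd s t j = nd s' t' j + nd s'' t'' j) -> ham s t = ham s' t' + ham s'' t''.
Proof.
  intros H. set (vs := [s; t; s'; t'; s''; t'']).
  rewrite (ham_Lm vs s t), (ham_Lm vs s' t'), (ham_Lm vs s'' t''); unfold vs; simpl; auto 7.
  apply cnt_comb. exact H.
Qed.

Definition xorQ {I : Type} (a b : V (hypercube I)) : V (hypercube I).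
Proof.
  exists (fun j => xorb (bits a j) (bits b j)). exists (suppl a ++ suppl b). intros j H.
  apply in_or_app. destruct (bits a j) eqn:E. left; apply suppl_spec; auto.
  right; apply suppl_spec. simpl in H. auto.
Defined.

Lemma bits_xorQ {I : Type} (a b : V (hypercube I)) j : bits (xorQ a b) j = xorb (bits a j) (bits b j).
Proof. reflexivity. Qed.

Definition pairQ {I K : Type} (a : V (hypercube I)) (c : V (hypercube K)) : V (hypercube (I + K)).
Proof.
  exists (fun p => match p with inl j => bits a j | inr j => bits c j end).
  exists (map inl (suppl a) ++ map inr (suppl c)). intros [j|j] H; apply in_or_app.
  left; apply in_map, suppl_spec; auto. right; apply in_map, suppl_spec; auto.
Defined.

Lemma cnt_app {I : Type} (L L' : list I) s t : cntL (L ++ L') s t = cntL L s t + cntL L' s t.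
Proof. induction L; simpl; auto. rewrite !cnt_cons. rewrite IHL. lia. Qed.

Lemma cnt_map {I K : Type} (g : I -> K) (L : list I) s t :
  cntL (map g L) s t = cntL L (fun j => s (g j)) (fun j => t (g j)).
Proof. induction L; simpl; auto. rewrite !cnt_cons. rewrite IHL. auto. Qed.

Lemma ham_pair {I K : Type} (a b : V (hypercube I)) (c e : V (hypercube K)) :
  ham (pairQ a c) (pairQ b e) = ham a b + ham c e.
Proof.
  set (L0 := nodup eqdec (suppl a ++ suppl b)). set (L1 := nodup eqdec (suppl c ++ suppl e)).
  assert (N0 : NoDup L0) by apply NoDup_nodup. assert (N1 : NoDup L1) by apply NoDup_nodup.
  assert (C0 : covL L0 (bits a) (bits b)) by (apply cov_supp; intros; apply nodup_In, in_or_app; auto).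
  assert (C1 : covL L1 (bits c) (bits e)) by (apply cov_supp; intros; apply nodup_In, in_or_app; auto).
  rewrite (ham_L a b L0 N0 C0), (ham_L c e L1 N1 C1).
  rewrite (ham_L _ _ (map inl L0 ++ map inr L1)).
  - rewrite cnt_app, !cnt_map. reflexivity.
  - apply NoDup_app. apply Injective_map_NoDup; auto. intros u v E; inversion E; auto.
    apply Injective_map_NoDup; auto. intros u v E; inversion E; auto.
    intros p Hp Hp'. apply in_map_iff in Hp, Hp'. destruct Hp as [u [<- _]], Hp' as [v [E _]]. discriminate.
  - intros [j|j] H; apply in_or_app; [left|right]; apply in_map; [apply C0|apply C1]; auto.
Qed.

Section PL.
Variable G : Graph.
Variable J : Type.
Variable f : V G -> V (hypercube J).
Hypothesis Hf : pcemb G J f.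
Let d := dG G J f.
Let bit (v : V G) (e : J) := bits (f v) e.

Variable S P : vset G.
Hypothesis HS : convex G S.
Hypothesis HP : convex G P.
Hypothesis HPS : forall p, P p -> S p.
Variable pi : V G -> V G.
Hypothesis Hpi : forall s, S s -> P (pi s) /\ forall p, P p -> interval G s p (pi s).

Lemma iv_d : forall x y z, interval G x y z <-> d x z + d z y = d x y.
Proof. apply (interval_d _ _ Hf). Qed.

Lemma pi_id : forall p, P p -> pi p = p.
Proof.
  intros p Pp. destruct (Hpi p (HPS p Pp)) as [_ H]. specialize (H p Pp).
  symmetry. apply (interval_xx _ _ Hf) in H. auto.
Qed.

Lemma gate_dist : forall s p, S s -> P p -> d s p = d s (pi s) + d (pi s) p.
Proof. intros s p Ss Pp. destruct (Hpi s Ss) as [_ H]. specialize (H p Pp). rewrite iv_d in H. lia. Qed.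

Lemma gate_coord : forall e, (forall s, S s -> bit (pi s) e = bit s e) \/
   (forall p p', P p -> P p' -> bit p e = bit p' e).
Proof.
  intros e. destruct (classic (exists p p', P p /\ P p' /\ bit p e <> bit p' e)) as [[p [p' [Pp [Pp' Hne]]]]|Hno].
  - left. intros s Ss. destruct (Hpi s Ss) as [_ H].
    pose proof (H p Pp) as H1. pose proof (H p' Pp') as H2.
    rewrite (betw _ _ _ Hf) in H1, H2. specialize (H1 e). specialize (H2 e).
    unfold bit in *. destruct H1; auto. destruct H2; auto. congruence.
  - right. intros p p' Pp Pp'. destruct (bool_dec (bit p e) (bit p' e)); auto. exfalso; eauto 6.
Qed.

Lemma gate_mono : forall s s' w, S s -> S s' -> interval G s s' w -> interval G (pi s) (pi s') (pi w).
Proof.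
  intros s s' w Ss Ss' Hi. assert (Sw : S w) by (apply (HS s s' w); auto).
  rewrite (betw _ _ _ Hf) in Hi |- *. intros e. destruct (gate_coord e) as [Hc|Hc].
  - fold (bit (pi w) e) (bit (pi s) e) (bit (pi s') e). rewrite !Hc; auto. apply Hi.
  - left. apply Hc; apply Hpi; auto.
Qed.

Lemma preim_convex : forall B, convex G B -> convex G (fun s => S s /\ B (pi s)).
Proof.
  intros B HB u v w [Su Bu] [Sv Bv] Hi. split. apply (HS u v w); auto.
  apply (HB (pi u) (pi v)); auto. apply gate_mono; auto.
Qed.

Lemma Vset_convex : forall x, convex G (fun s => S s /\ interval G x (pi s) s).
Proof.
  intros x u v w [Su Iu] [Sv Iv] Hi. assert (Sw : S w) by (apply (HS u v w); auto). split; auto.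
  rewrite (betw _ _ _ Hf) in Iu, Iv, Hi |- *. intros e.
  destruct (gate_coord e) as [Hc|Hc].
  - right. symmetry. apply Hc; auto.
  - fold (bit w e) (bit x e) (bit (pi w) e). specialize (Iu e); specialize (Iv e); specialize (Hi e).
    fold (bit u e) (bit v e) (bit x e) (bit w e) (bit (pi u) e) (bit (pi v) e) in *.
    assert (E1 : bit (pi u) e = bit (pi w) e) by (apply Hc; apply Hpi; auto).
    assert (E2 : bit (pi v) e = bit (pi w) e) by (apply Hc; apply Hpi; auto).
    destruct (bool_dec (bit w e) (bit (pi w) e)) as [|Hn]; auto. left.
    destruct Hi as [Hi|Hi]; rewrite Hi in *.
    + destruct Iu; auto. congruence.
    + destruct Iv; auto. congruence.
Qed.

Lemma copoint_P : forall C x c1, S x -> copointIn G S C x -> C c1 -> P c1 -> ~ C (pi x) ->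
  copointIn G P (fun v => C v /\ P v) (pi x).
Proof.
  intros C x c1 Sx [C1 [C2 [C3 C4]]] Cc1 Pc1 nC.
  assert (HCpi : forall c, C c -> C (pi c) /\ P (pi c)).
  { intros c Cc. destruct (Hpi c (C1 c Cc)) as [Pc H]. split; auto. apply (C2 c c1); auto. }
  split. intros v [_ Pv]; auto. split. apply conv_inter; auto. split. intros [H _]; auto.
  intros D D1 D2 D3 D4 v Dv. split; auto.
  refine (C4 (fun s => S s /\ D (pi s)) _ _ _ _ v _).
  - intros s [Ss _]; auto.
  - apply preim_convex; auto.
  - intros [_ H]; auto.
  - intros c Cc. split; [exact (C1 c Cc)| apply D4; apply HCpi; auto].
  - split. apply HPS; auto. rewrite pi_id; auto.
Qed.

Lemma LemmaG : forall C x c1 z, ph1 G P -> S x -> copointIn G S C x -> C c1 -> P c1 -> ~ C (pi x) ->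
  hull G (add1 G C x) z -> P z -> ~ C z -> exists c, C c /\ interval G x c z.
Proof.
  intros C x c1 z Hph Sx HC Cc1 Pc1 nC Hz Pz nCz.
  pose proof (copoint_P C x c1 Sx HC Cc1 Pc1 nC) as HCP.
  destruct HC as [C1 [C2 [C3 C4]]].
  set (CP := fun v => C v /\ P v) in *.
  set (TP := hull G (add1 G CP (pi x))).
  assert (Kz : S z /\ TP (pi z)).
  { apply (hull_min _ _ (fun s => S s /\ TP (pi s))) in Hz; auto.
    - apply preim_convex. apply hull_convex.
    - intros v [Cv| ->].
      + split; auto. apply hull_incl. left. destruct (Hpi v (C1 v Cv)) as [Pv H]. split; auto.
        apply (C2 v c1); auto.
      + split; auto. apply hull_incl. right; auto. }
  destruct Kz as [_ Tz]. rewrite pi_id in Tz; auto.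
  apply (Hph (pi x) CP) in Tz; [|apply Hpi; auto| auto].
  assert (Hc : exists c, C c /\ P c /\ interval G (pi x) c z).
  { destruct Tz as (a & a' & Ha & Ha' & Hi).
    destruct Ha as [[Ca Pa]| ->]; destruct Ha' as [[Ca' Pa']| ->].
    - exfalso. apply nCz. apply (C2 a a'); auto.
    - exists a. repeat split; auto. apply (interval_sym _ _ Hf); auto.
    - exists a'. repeat split; auto.
    - apply (interval_xx _ _ Hf) in Hi. subst. exists c1. repeat split; auto. apply (interval_l _ _ Hf). }
  destruct Hc as [c [Cc [Pc Hi]]]. exists c. split; auto.
  rewrite iv_d in Hi |- *.
  pose proof (gate_dist x c Sx Pc). pose proof (gate_dist x z Sx Pz). lia.
Qed.

Lemma LemmaV : forall C x c1 z, ph1 G P -> S x -> copointIn G S C x -> (forall v, C v -> P v) -> C c1 ->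
  ~ C (pi x) -> hull G (add1 G C x) z -> ~ C z -> exists c, C c /\ interval G x c z.
Proof.
  intros C x c1 z Hph Sx HC HCP' Cc1 nC Hz nCz.
  pose proof (copoint_P C x c1 Sx HC Cc1 (HCP' c1 Cc1) nC) as HCP.
  destruct HC as [C1 [C2 [C3 C4]]].
  set (CP := fun v => C v /\ P v) in *.
  set (TP := hull G (add1 G CP (pi x))).
  assert (Kz : (S z /\ TP (pi z)) /\ (S z /\ interval G x (pi z) z)).
  { apply (hull_min _ _ (fun s => (S s /\ TP (pi s)) /\ (S s /\ interval G x (pi s) s))) in Hz; auto.
    - apply conv_inter. apply preim_convex. apply hull_convex. apply Vset_convex.
    - intros v [Cv| ->].
      + rewrite pi_id; auto. split; split; auto. apply hull_incl. left. split; auto.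
        apply (interval_r _ _ Hf).
      + split; split; auto. apply hull_incl. right; auto. apply (interval_l _ _ Hf). }
  destruct Kz as [[Sz Tz] [_ Iz]].
  apply (Hph (pi x) CP) in Tz; [|apply Hpi; auto| auto].
  destruct Tz as (a & a' & Ha & Ha' & Hi).
  assert (Hc : C (pi z) \/ exists c, C c /\ P c /\ interval G (pi x) c (pi z)).
  { destruct Ha as [[Ca Pa]| ->]; destruct Ha' as [[Ca' Pa']| ->].
    - left. apply (C2 a a'); auto.
    - right. exists a. repeat split; auto. apply (interval_sym _ _ Hf); auto.
    - right. exists a'. repeat split; auto.
    - right. apply (interval_xx _ _ Hf) in Hi. rewrite Hi. exists c1. repeat split; auto. apply (interval_l _ _ Hf). }
  destruct Hc as [Cpz|[c [Cc [Pc Hc]]]].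
  - exists (pi z). split; auto.
  - exists c. split; auto. rewrite iv_d in Hc, Iz |- *.
    assert (Ppz : P (pi z)) by (apply Hpi; auto).
    pose proof (gate_dist x c Sx Pc). pose proof (gate_dist x (pi z) Sx Ppz).
    pose proof (gate_dist z c Sz Pc). lia.
Qed.

End PL.

Section Core.
Variable G : Graph.
Variable J : Type.
Variable f : V G -> V (hypercube J).
Hypothesis Hf : pcemb G J f.
Variables A B : vset G.
Variables piA piB : V G -> V G.
Hypothesis HAc : convex G A.
Hypothesis HBc : convex G B.
Hypothesis HgA : forall v, A (piA v) /\ forall a, A a -> interval G v a (piA v).
Hypothesis HgB : forall v, B (piB v) /\ forall a, B a -> interval G v a (piB v).
Variable o : V G.
Hypothesis HoA : A o.
Hypothesis HoB : B o.
Hypothesis Hcov : forall v, A v \/ B v.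
Hypothesis phA : forall T, convex G T -> finite_set G T -> (forall v, T v -> A v) -> ph1 G T.
Hypothesis phB : forall T, convex G T -> finite_set G T -> (forall v, T v -> B v) -> ph1 G T.

Lemma gateP (S Q : vset G) (piQ : V G -> V G) : convex G S ->
  (forall v, Q (piQ v) /\ forall a, Q a -> interval G v a (piQ v)) ->
  forall p0, S p0 -> Q p0 ->
  forall s, S s -> (S (piQ s) /\ Q (piQ s)) /\ forall p, S p /\ Q p -> interval G s p (piQ s).
Proof.
  intros HS Hg p0 Sp0 Qp0 s Ss. destruct (Hg s) as [Hq Hi]. split.
  split; auto. apply (HS s p0); auto. intros p [Sp Qp]; auto.
Qed.

Lemma fin_sub (S T : vset G) : finite_set G S -> (forall v, T v -> S v) -> finite_set G T.
Proof. intros [l Hl] H. exists l. auto. Qed.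

Lemma amalg_core (S : vset G) (HS : convex G S) (Sfin : finite_set G S) x C (Sx : S x)
  (HC : copointIn G S C x) (Ax : A x) z (Hz : hull G (add1 G C x) z) : Iset G (add1 G C x) z.
Proof.
  assert (Sz : S z).
  { apply (hull_min _ _ S) in Hz; auto. intros v [Cv| ->]; auto. apply HC; auto. }
  destruct (classic (exists c0, C c0)) as [[c0 Cc0]|Hno].
  2:{ assert (z = x).
      { apply (hull_min _ _ (fun v => v = x)) in Hz; auto.
        - intros u w t -> -> Hi. apply (interval_xx _ _ Hf) in Hi; auto.
        - intros v [Hv| ->]; auto. exfalso; eauto. }
      subst. apply Iset_incl. right; auto. }
  destruct (classic (C z)) as [Cz|nCz]. { apply Iset_incl. left; auto. }
  assert (HCS : forall c, C c -> S c) by apply HC.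
  assert (HCconv : convex G C) by apply HC.
  enough (exists c, C c /\ interval G x c z) as [c [Cc Hc]].
  { exists x, c. split. right; auto. split. left; auto. auto. }
  assert (PA_conv : convex G (fun v => S v /\ A v)) by (apply conv_inter; auto).
  assert (PB_conv : convex G (fun v => S v /\ B v)) by (apply conv_inter; auto).
  assert (phPA : ph1 G (fun v => S v /\ A v)).
  { apply phA; auto. apply fin_sub with S; auto. intros v [? ?]; auto. intros v [? ?]; auto. }
  assert (phPB : ph1 G (fun v => S v /\ B v)).
  { apply phB; auto. apply fin_sub with S; auto. intros v [? ?]; auto. intros v [? ?]; auto. }
  assert (piA_id : forall a, A a -> piA a = a).
  { intros a Ha. destruct (HgA a) as [_ H]. specialize (H a Ha). apply (interval_xx _ _ Hf) in H. auto. }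
  assert (piB_id : forall a, B a -> piB a = a).
  { intros a Ha. destruct (HgB a) as [_ H]. specialize (H a Ha). apply (interval_xx _ _ Hf) in H. auto. }
  assert (crossAB : forall v, A v -> A (piB v)).
  { intros v Hv. apply (HAc v o); auto. apply HgB; auto. }
  assert (claimA : A z -> exists c, C c /\ interval G x c z).
  { intros Az. destruct (classic (exists c1, C c1 /\ A c1)) as [[c1 [Cc1 Ac1]]|HnA].
    - apply (LemmaG G J f Hf S (fun v => S v /\ A v) HS PA_conv (fun p H => proj1 H) piA
        (gateP S A piA HS HgA x Sx Ax) C x c1 z); auto.
      rewrite piA_id; auto. apply HC.
    - apply (LemmaV G J f Hf S (fun v => S v /\ B v) HS PB_conv (fun p H => proj1 H) piB
        (gateP S B piB HS HgB c0 (HCS c0 Cc0) ltac:(destruct (Hcov c0); auto; exfalso; eauto)) C x c0 z); auto.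
      + intros v Cv. split; auto. destruct (Hcov v); auto. exfalso; eauto.
      + intros Hc. apply HnA. exists (piB x). split; auto. }
  destruct (Hcov z) as [Az|Bz]; auto.
  destruct (classic (exists c1, C c1 /\ B c1)) as [[c1 [Cc1 Bc1]]|HnB].
  2:{ apply claimA. apply (hull_min _ _ A) in Hz; auto. intros v [Cv| ->]; auto.
      destruct (Hcov v); auto. exfalso; eauto. }
  assert (HgPB := gateP S B piB HS HgB c1 (HCS c1 Cc1) Bc1).
  destruct (classic (C (piB x))) as [Cpx|nCpx].
  - exfalso. apply nCz.
    assert (K : S z /\ C (piB z)).
    { apply (hull_min _ _ (fun s => S s /\ C (piB s))) in Hz; auto.
      - apply (preim_convex G J f Hf S (fun v => S v /\ B v) HS piB HgPB); auto.
      - intros v [Cv| ->]; split; auto. apply (HCconv v c1); auto. apply HgB; auto. }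
    rewrite piB_id in K; auto. apply K.
  - apply (LemmaG G J f Hf S (fun v => S v /\ B v) HS PB_conv (fun p H => proj1 H) piB HgPB C x c1 z); auto.
Qed.

End Core.

Lemma pc_conn (G : Graph) : partial_cube G -> forall x y : V G, exists n, walk G n x y.
Proof.
  intros H. apply pc_to_emb in H. destruct H as [I [f Hf]]. intros x y. eexists. apply (d_walk _ _ Hf).
Qed.

Lemma iso_conn (H K : Graph) : graph_iso H K -> (forall x y : V H, exists n, walk H n x y) ->
  forall x y : V K, exists n, walk K n x y.
Proof.
  intros [f [Hi [Hs Ha]]] Hc x y. destruct (Hs x) as [x' <-]. destruct (Hs y) as [y' <-].
  destruct (Hc x' y') as [n Hn]. exists n. apply walk_map with (H := H); auto. intros; apply Ha; auto.
Qed.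

Lemma induced_walk (G : Graph) (A : vset G) : forall n (x y : V (induced G A)), walk _ n x y ->
  walk G n (proj1_sig x) (proj1_sig y).
Proof. intros. apply walk_map with (H := induced G A) (phi := fun x => proj1_sig x); auto. Qed.

Lemma emb_gen (K G : Graph) (A : vset G) : convex G A -> graph_iso K (induced G A) ->
  exists e, cemb K G e /\ forall w, A w <-> exists x, e x = w.
Proof.
  intros HA [phi [Hi [Hs Ha]]]. exists (fun x => ival G A (phi x)). split.
  - apply cemb_comp with (induced G A). split; auto. split; auto. intros a b w _ _ _. apply Hs.
    apply cemb_induced; auto.
  - intros w; split.
    + intros Hw. destruct (Hs (exist _ w Hw)) as [x Hx]. exists x. rewrite Hx. reflexivity.
    + intros [x <-]. exact (proj2_sig (phi x)).
Qed.

Lemma pick_emb (K : Graph) : partial_cube K -> {J : Type & {h : V K -> V (hypercube J) | pcemb K J h}}.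
Proof.
  intros HK. destruct (constructive_indefinite_description _ (pc_to_emb _ HK)) as [J HJ].
  destruct (constructive_indefinite_description _ HJ) as [h Hh]. exact (existT _ J (exist _ h Hh)).
Defined.

Section Amalg.
Variables G G0 G1 : Graph.
Hypothesis H0 : ph_hom_partial_cube G0.
Hypothesis H1 : ph_hom_partial_cube G1.
Variables A0 A1 : vset G.
Hypothesis HA0 : gated G A0.
Hypothesis HA1 : gated G A1.
Variable o : V G.
Hypothesis Ho0 : A0 o.
Hypothesis Ho1 : A1 o.
Hypothesis Hcov : forall v, A0 v \/ A1 v.
Hypothesis Iso0 : graph_iso G0 (induced G A0).
Hypothesis Iso1 : graph_iso G1 (induced G A1).

Definition pi0 := gate_of G A0 HA0.
Definition pi1 := gate_of G A1 HA1.

Lemma A0_conn : forall a a', A0 a -> A0 a' -> exists n, walk G n a a'.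
Proof.
  intros a a' Ha Ha'. destruct (iso_conn _ _ Iso0 (pc_conn _ (proj1 H0)) (exist _ a Ha) (exist _ a' Ha')) as [n Hn].
  exists n. apply induced_walk in Hn. auto.
Qed.

Lemma G_conn : forall x y : V G, exists n, walk G n x y.
Proof.
  intros x y. destruct (gate_spec G A0 HA0 x) as [Hx Ix]. destruct (gate_spec G A0 HA0 y) as [Hy Iy].
  destruct (Ix _ Hx) as [n1 [m1 [W1 _]]]. destruct (Iy _ Hy) as [n2 [m2 [W2 _]]].
  destruct (A0_conn _ _ Hx Hy) as [m Wm].
  apply walk_rev in W2. exists (n1 + (m + n2)). eapply walk_app; eauto. eapply walk_app; eauto.
Qed.

Definition dd : V G -> V G -> nat := proj1_sig (constructive_indefinite_description _ (conn_dfun G G_conn)).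
Lemma Hdd : dfun G dd.
Proof. unfold dd. destruct (constructive_indefinite_description _ _); auto. Qed.

Lemma A0_conv : convex G A0. Proof. apply (gated_convex _ _ Hdd); auto. Qed.
Lemma A1_conv : convex G A1. Proof. apply (gated_convex _ _ Hdd); auto. Qed.

Lemma pi0_in v : A0 (pi0 v). Proof. apply (gate_spec G A0 HA0 v). Qed.
Lemma pi1_in v : A1 (pi1 v). Proof. apply (gate_spec G A1 HA1 v). Qed.
Lemma pi0_iv v a : A0 a -> interval G v a (pi0 v). Proof. apply (gate_spec G A0 HA0 v). Qed.
Lemma pi1_iv v a : A1 a -> interval G v a (pi1 v). Proof. apply (gate_spec G A1 HA1 v). Qed.

Lemma pi0_id a : A0 a -> pi0 a = a.
Proof. intros Ha. pose proof (pi0_iv a a Ha). apply (interval_xx _ _ Hdd) in H. auto. Qed.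
Lemma pi1_id a : A1 a -> pi1 a = a.
Proof. intros Ha. pose proof (pi1_iv a a Ha). apply (interval_xx _ _ Hdd) in H. auto. Qed.

Lemma pi0_d v a : A0 a -> dd v a = dd v (pi0 v) + dd (pi0 v) a.
Proof. intros Ha. pose proof (pi0_iv v a Ha). rewrite (interval_d _ _ Hdd) in H. lia. Qed.
Lemma pi1_d v a : A1 a -> dd v a = dd v (pi1 v) + dd (pi1 v) a.
Proof. intros Ha. pose proof (pi1_iv v a Ha). rewrite (interval_d _ _ Hdd) in H. lia. Qed.

Lemma cross01 v : A0 v -> A0 (pi1 v).
Proof. intros Hv. apply (A0_conv v o); auto. apply pi1_iv; auto. Qed.
Lemma cross10 v : A1 v -> A1 (pi0 v).
Proof. intros Hv. apply (A1_conv v o); auto. apply pi0_iv; auto. Qed.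


Definition e0sig := constructive_indefinite_description _ (emb_gen G0 G A0 A0_conv Iso0).
Definition e1sig := constructive_indefinite_description _ (emb_gen G1 G A1 A1_conv Iso1).
Definition e0 := proj1_sig e0sig.
Definition e1 := proj1_sig e1sig.
Lemma He0 : cemb G0 G e0. Proof. exact (proj1 (proj2_sig e0sig)). Qed.
Lemma He1 : cemb G1 G e1. Proof. exact (proj1 (proj2_sig e1sig)). Qed.
Lemma Im0 : forall w, A0 w <-> exists x, e0 x = w. Proof. exact (proj2 (proj2_sig e0sig)). Qed.
Lemma Im1 : forall w, A1 w <-> exists x, e1 x = w. Proof. exact (proj2 (proj2_sig e1sig)). Qed.

Definition psi0 (v : V G) : V G0 := proj1_sig (constructive_indefinite_description _ (proj1 (Im0 (pi0 v)) (pi0_in v))).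
Definition psi1 (v : V G) : V G1 := proj1_sig (constructive_indefinite_description _ (proj1 (Im1 (pi1 v)) (pi1_in v))).
Lemma psi0_spec v : e0 (psi0 v) = pi0 v.
Proof. unfold psi0. destruct (constructive_indefinite_description _ _); auto. Qed.
Lemma psi1_spec v : e1 (psi1 v) = pi1 v.
Proof. unfold psi1. destruct (constructive_indefinite_description _ _); auto. Qed.

Definition J0 := projT1 (pick_emb G0 (proj1 H0)).
Definition J1 := projT1 (pick_emb G1 (proj1 H1)).
Definition h0 : V G0 -> V (hypercube J0) := proj1_sig (projT2 (pick_emb G0 (proj1 H0))).
Definition h1 : V G1 -> V (hypercube J1) := proj1_sig (projT2 (pick_emb G1 (proj1 H1))).
Lemma Hh0 : pcemb G0 J0 h0. Proof. exact (proj2_sig (projT2 (pick_emb G0 (proj1 H0)))). Qed.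
Lemma Hh1 : pcemb G1 J1 h1. Proof. exact (proj2_sig (projT2 (pick_emb G1 (proj1 H1)))). Qed.

Definition g0 v := h0 (psi0 v).
Definition g1 v := h1 (psi1 v).

Lemma g0_dist v w : ham (g0 v) (g0 w) = dd (pi0 v) (pi0 w).
Proof.
  unfold g0. rewrite <- (psi0_spec v), <- (psi0_spec w).
  apply (dfun_unique _ _ _ Hh0 (cemb_dfun _ _ _ He0 _ Hdd)).
Qed.
Lemma g1_dist v w : ham (g1 v) (g1 w) = dd (pi1 v) (pi1 w).
Proof.
  unfold g1. rewrite <- (psi1_spec v), <- (psi1_spec w).
  apply (dfun_unique _ _ _ Hh1 (cemb_dfun _ _ _ He1 _ Hdd)).
Qed.

Lemma g1_betw a a' z : A1 a -> A1 a' -> A1 z ->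
  (interval G a a' z <-> forall j, bits (g1 z) j = bits (g1 a) j \/ bits (g1 z) j = bits (g1 a') j).
Proof.
  intros Ha Ha' Hz. rewrite (interval_d _ _ Hdd), <- ham_between, !g1_dist, !pi1_id; auto. tauto.
Qed.

Lemma g1_coord j : (forall u, A1 u -> bits (g1 (pi0 u)) j = bits (g1 u) j) \/
   (forall a a', A0 a -> A1 a -> A0 a' -> A1 a' -> bits (g1 a) j = bits (g1 a') j).
Proof.
  destruct (classic (exists a a', A0 a /\ A1 a /\ A0 a' /\ A1 a' /\ bits (g1 a) j <> bits (g1 a') j))
    as [(a & a' & Ha0 & Ha1 & Ha0' & Ha1' & Hne)|Hno].
  - left. intros u Hu. pose proof (pi0_iv u a Ha0) as I1. pose proof (pi0_iv u a' Ha0') as I2.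
    rewrite g1_betw in I1, I2; auto; try apply cross10; auto.
    destruct (I1 j); auto. destruct (I2 j); auto. congruence.
  - right. intros a a' Ha0 Ha1 Ha0' Ha1'. destruct (bool_dec (bits (g1 a) j) (bits (g1 a') j)); auto.
    exfalso; apply Hno; exists a, a'; auto 7.
Qed.

Definition FA (v : V G) : V (hypercube (J0 + J1)%type) := pairQ (g0 v) (xorQ (g1 v) (g1 (pi0 v))).

Lemma nd_xorQ {I : Type} (a b c e : V (hypercube I)) j :
  nd (xorQ a b) (xorQ c e) j = if dif (xorb (bits a j) (bits b j)) (xorb (bits c j) (bits e j)) then 1 else 0.
Proof. reflexivity. Qed.

Lemma ham_xx {I : Type} (a b c : V (hypercube I)) : ham (xorQ a a) (xorQ b c) = ham b c.
Proof.
  transitivity (ham b c + ham b b).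
  - apply ham_comb. intros j. unfold nd. rewrite !bits_xorQ, xorb_nilpotent.
    unfold dif; destruct (bits b j), (bits c j); reflexivity.
  - pose proof (d_refl _ _ (dfun_Q I) b). simpl in H. lia.
Qed.

Lemma FA_A0A1 v w : A0 v -> A1 w -> ham (FA v) (FA w) = dd v w.
Proof.
  intros Hv Hw. unfold FA. rewrite ham_pair, g0_dist. rewrite (pi0_id v Hv).
  rewrite ham_xx, g1_dist. rewrite (pi1_id w Hw), (pi1_id (pi0 w)) by (apply cross10; auto).
  rewrite (d_sym _ _ Hdd v w), (pi0_d w v Hv), (d_sym _ _ Hdd (pi0 w) v). lia.
Qed.

Lemma FA_dist v w : ham (FA v) (FA w) = dd v w.
Proof.
  destruct (Hcov v) as [Hv|Hv]; destruct (Hcov w) as [Hw|Hw].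
  - unfold FA. rewrite ham_pair, g0_dist, (pi0_id v Hv), (pi0_id w Hw).
    rewrite <- (Nat.add_0_r (dd v w)) at 2. f_equal.
    apply ham_zero_iff. intros j. rewrite !bits_xorQ, !xorb_nilpotent. reflexivity.
  - apply FA_A0A1; auto.
  - rewrite ham_sym, (d_sym _ _ Hdd). apply FA_A0A1; auto.
  - assert (E : dd v w = ham (g1 v) (g1 w)) by (rewrite g1_dist, !pi1_id; auto).
    rewrite E. unfold FA. rewrite ham_pair, g0_dist.
    assert (E2 : dd (pi0 v) (pi0 w) = ham (g1 (pi0 v)) (g1 (pi0 w))).
    { rewrite g1_dist, !pi1_id; auto; apply cross10; auto. }
    rewrite E2. symmetry. apply ham_comb. intros j. unfold nd. rewrite !bits_xorQ.
    destruct (g1_coord j) as [Hc|Hc].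
    + rewrite !Hc; auto. unfold dif. destruct (bits (g1 v) j), (bits (g1 w) j); reflexivity.
    + rewrite (Hc (pi0 v) (pi0 w)); try apply pi0_in; try apply cross10; auto.
      unfold dif. destruct (bits (g1 v) j), (bits (g1 w) j), (bits (g1 (pi0 w)) j); reflexivity.
Qed.

Lemma HFA : pcemb G (J0 + J1)%type FA.
Proof. apply dfun_ext with dd. apply Hdd. intros; rewrite FA_dist; auto. Qed.

Lemma G_pc : partial_cube G.
Proof. apply emb_to_pc with (J0 + J1)%type FA. apply HFA. Qed.

Lemma convex_ext (A B : vset G) : seteq A B -> convex G A -> convex G B.
Proof. intros E HA x y z Hx Hy Hi. apply E. apply (HA x y z); [apply E; exact Hx| apply E; exact Hy| exact Hi]. Qed.

Lemma phA0 : forall T, convex G T -> finite_set G T -> (forall v, T v -> A0 v) -> ph1 G T.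
Proof.
  intros T HT [l Hl] HTA.
  assert (E : seteq (img e0 (fun x => T (e0 x))) T).
  { intros w; split. intros [x [Hx <-]]; auto. intros Hw. destruct (proj1 (Im0 w) (HTA w Hw)) as [x <-].
    exists x; auto. }
  apply ph1_ext with (img e0 (fun x => T (e0 x))); auto.
  apply (cemb_ph1 _ _ _ He0). apply ph_hom_iff. apply H0.
  - apply (cemb_convex _ _ _ He0). apply convex_ext with T; auto. intros v; split; apply E.
  - exists (map psi0 l). intros x Hx. 
    assert (psi0 (e0 x) = x).
    { apply (cemb_inj _ _ _ He0). rewrite psi0_spec. apply pi0_id. apply Im0; eauto. }
    rewrite <- H. apply in_map. auto.
Qed.

Lemma phA1 : forall T, convex G T -> finite_set G T -> (forall v, T v -> A1 v) -> ph1 G T.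
Proof.
  intros T HT [l Hl] HTA.
  assert (E : seteq (img e1 (fun x => T (e1 x))) T).
  { intros w; split. intros [x [Hx <-]]; auto. intros Hw. destruct (proj1 (Im1 w) (HTA w Hw)) as [x <-].
    exists x; auto. }
  apply ph1_ext with (img e1 (fun x => T (e1 x))); auto.
  apply (cemb_ph1 _ _ _ He1). apply ph_hom_iff. apply H1.
  - apply (cemb_convex _ _ _ He1). apply convex_ext with T; auto. intros v; split; apply E.
  - exists (map psi1 l). intros x Hx. 
    assert (psi1 (e1 x) = x).
    { apply (cemb_inj _ _ _ He1). rewrite psi1_spec. apply pi1_id. apply Im1; eauto. }
    rewrite <- H. apply in_map. auto.
Qed.

Lemma G_phhom : ph_homogeneous G.
Proof.
  apply ph_hom_iff. intros S HS Sfin x C Sx HC z Hz.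
  destruct (Hcov x) as [Ax|Ax].
  - apply (amalg_core G _ FA HFA A0 A1 pi0 pi1 A0_conv A1_conv (gate_spec G A0 HA0) (gate_spec G A1 HA1)
      o Ho0 Ho1 Hcov phA0 phA1 S HS Sfin x C Sx HC Ax z Hz).
  - apply (amalg_core G _ FA HFA A1 A0 pi1 pi0 A1_conv A0_conv (gate_spec G A1 HA1) (gate_spec G A0 HA0)
      o Ho1 Ho0 (fun v => match Hcov v with or_introl h => or_intror h | or_intror h => or_introl h end) phA1 phA0 S HS Sfin x C Sx HC Ax z Hz).
Qed.

End Amalg.

Lemma part2 : forall G G0 G1 : Graph,
      ph_hom_partial_cube G0 -> ph_hom_partial_cube G1 ->
      gated_amalgam G G0 G1 -> ph_hom_partial_cube G.
Proof.
  intros G G0 G1 H0 H1 (A0 & A1 & HA0 & HA1 & [o [Ho0 Ho1]] & Hcov & Iso0 & Iso1).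
  split. apply (G_pc G G0 G1 H0 H1 A0 A1 HA0 HA1 o Ho0 Ho1 Hcov Iso0 Iso1).
  apply (G_phhom G G0 G1 H0 H1 A0 A1 HA0 HA1 o Ho0 Ho1 Hcov Iso0 Iso1).
Qed.

Theorem theorem3p21 :
  (* convex subgraphs *)
  (forall (G : Graph) (S : vset G),
      ph_hom_partial_cube G -> convex G S -> ph_hom_partial_cube (induced G S)) /\
  (* gated amalgams *)
  (forall G G0 G1 : Graph,
      ph_hom_partial_cube G0 -> ph_hom_partial_cube G1 ->
      gated_amalgam G G0 G1 -> ph_hom_partial_cube G) /\
  (* finite Cartesian products *)
  (forall (I : Type) (F : I -> Graph),
      finite_type I -> (forall i, ph_hom_partial_cube (F i)) ->
      ph_hom_partial_cube (cart_prod I F)) /\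
  (* weak Cartesian products of infinite families *)
  (forall (I : Type) (F : I -> Graph),
      ~ finite_type I -> (forall i, ph_hom_partial_cube (F i)) ->
      forall b : V (cart_prod I F), ph_hom_partial_cube (weak_prod I F b)).
Proof.
  split; [exact part1|]. split; [exact part2|]. split; [exact part3| exact part4].
Qed.
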